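(* In the network setting of the context, let $r$ be the running cost with $m\ge1$ and strictly positive vectors $\xi\in(0,\infty)^I$, $\zeta\in(0,\infty)^J$. Then there exist $\delta>0$ and $\tilde C>0$ such that Hypothesis A holds (with $d=I$) for the cost $r$, with $\mathcal K=\mathcal K_\delta:=\{x\in\mathbb R^I:|e\cdot x|>\delta|x|\}$ and $h(x,u)=\tilde C|x|^m$.
   Context: Network setting. $\mathcal I=\{1,\dots,I\}$, $\mathcal J=\{1,\dots,J\}$; $\mathcal G$ a bipartite tree on $\mathcal I\cup\mathcal J$ with edges $i\sim j$; $\mathcal J(i)=\{j:i\sim j\}$. Constants $\lambda_i>0$, $\gamma_i\ge0$, $\ell_i\in\mathbb R$; $\mu_{ij}>0$ if $i\sim j$, $\mu_{ij}=0$ otherwise. $e$ = all-ones vector, $a^\pm$ positive/negative parts. For $e\cdot\alpha=e\cdot\beta$, $G(\alpha,\beta)$ is the unique $\psi\in\mathbb R^{I\times J}$ with row sums $\alpha_i$, column sums $\beta_j$, and $\psi_{ij}=0$ for $i\not\sim j$. $\mathbb U=\{u=(u^c,u^s)\in\mathbb R^I_+\times\mathbb R^J_+:e\cdot u^c=e\cdot u^s=1\}$; $\hat G[u](x)=G(x-(e\cdot x)^+u^c,-(e\cdot x)^-u^s)$; drift $b_i(x,u)=-\sum_{j\in\mathcal J(i)}\mu_{ij}\hat G_{ij}[u](x)-\gamma_i(e\cdot x)^+u^c_i+\ell_i$. Controlled diffusion $dX_t=b(X_t,U_t)dt+\Sigma dW_t$ with $\Sigma=\operatorname{diag}(\sqrt{2\lambda_1},\dots,\sqrt{2\lambda_I})$;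 controlled generator $\mathcal L^u f(x)=\sum_i\lambda_i\partial_{ii}f(x)+b(x,u)\cdot\nabla f(x)$. Running cost: $r(x,u)=[(e\cdot x)^+]^m\sum_{i=1}^I\xi_i(u^c_i)^m+[(e\cdot x)^-]^m\sum_{j=1}^J\zeta_j(u^s_j)^m$. Hypothesis A (for a cost $r$, dimension $d$): there is an open $\mathcal K\subset\mathbb R^d$ such that (i) $\bar{\mathcal K}\cap\{x:\min_u r(x,u)\le c\}$ is compact for every $c\in\mathbb R$; (ii) there exist nonnegative functions $\mathcal V\in C^2(\mathbb R^d)$ and $h\in C(\mathbb R^d\times\mathbb U)$, both inf-compact (i.e. $\{x:\min_u h(x,u)\le c\}$ and $\{x:\mathcal V(x)\le c\}$ compact for all $c$), with $\mathcal L^u\mathcal V(x)\le1-h(x,u)$ for all $(x,u)\in\mathcal K^c\times\mathbb U$ and $\mathcal L^u\mathcal V(x)\le1+r(x,u)$ for all $(x,u)\in\mathcal K\times\mathbb U$. *)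

(* Defs.v *)
From Stdlib Require Import Reals Relations ClassicalEpsilon Arith.
Open Scope R_scope.

(* rsum n f = f 0 + ... + f (n-1)  (0 if n = 0). Indices are 0-based:
   {1,...,I} of the paper is {0,...,I-1} here. *)
Fixpoint rsum (n : nat) (f : nat -> R) : R :=
  match n with O => 0 | S k => rsum k f + f k end.

(* A point of R^d is a function nat -> R vanishing at indices >= d. *)
Definition inRd (d : nat) (x : nat -> R) : Prop := forall k, (d <= k)%nat -> x k = 0.

Definition edot (d : nat) (x : nat -> R) : R := rsum d x.
Definition norm (d : nat) (x : nat -> R) : R := sqrt (rsum d (fun i => x i * x i)).
Definition vsub (x y : nat -> R) : nat -> R := fun k => x k - y k.

Definition ppart (a : R) : R := Rmax a 0.
Definition npart (a : R) : R := Rmax (- a) 0.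

(* real power a^m for a >= 0 and m > 0 (0^m = 0) *)
Definition rpow (a m : R) : R := if Rle_dec a 0 then 0 else Rpower a m.

Definition is_open (d : nat) (K : (nat -> R) -> Prop) : Prop :=
  forall x, inRd d x -> K x -> exists eps, eps > 0 /\
    forall y, inRd d y -> norm d (vsub y x) < eps -> K y.

Definition closure (d : nat) (K : (nat -> R) -> Prop) : (nat -> R) -> Prop :=
  fun y => inRd d y /\ forall eps, eps > 0 -> exists x, inRd d x /\ K x /\ norm d (vsub x y) < eps.

(* compact subset of R^d  = closed and bounded (Heine-Borel) *)
Definition is_compact (d : nat) (S : (nat -> R) -> Prop) : Prop :=
  (exists M, forall x, inRd d x -> S x -> norm d x <= M) /\
  (forall (xs : nat -> nat -> R) y, (forall n, inRd d (xs n) /\ S (xs n)) -> inRd d y ->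
     (forall eps, eps > 0 -> exists N, forall n, (n >= N)%nat -> norm d (vsub (xs n) y) < eps) ->
     S y).

Definition continuous_on_Rd (d : nat) (f : (nat -> R) -> R) : Prop :=
  forall x, inRd d x -> forall eps, eps > 0 -> exists eta, eta > 0 /\
    forall y, inRd d y -> norm d (vsub y x) < eta -> Rabs (f y - f x) < eps.

Definition shift (x : nat -> R) (i : nat) (t : R) : nat -> R :=
  fun k => if Nat.eqb k i then x k + t else x k.

Definition has_partial (f : (nat -> R) -> R) (i : nat) (x : nat -> R) (l : R) : Prop :=
  derivable_pt_lim (fun t => f (shift x i t)) 0 l.

(* f is C^2 on R^d with first partials Df i and second partials D2f i j = d_j d_i f *)
Definition C2_with (d : nat) (f : (nat -> R) -> R)
    (Df : nat -> (nat -> R) -> R) (D2f : nat -> nat -> (nat -> R) -> R) : Prop :=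
  continuous_on_Rd d f /\
  (forall i, (i < d)%nat -> continuous_on_Rd d (Df i)) /\
  (forall i j, (i < d)%nat -> (j < d)%nat -> continuous_on_Rd d (D2f i j)) /\
  (forall x i, inRd d x -> (i < d)%nat -> has_partial f i x (Df i x)) /\
  (forall x i j, inRd d x -> (i < d)%nat -> (j < d)%nat -> has_partial (Df i) j x (D2f i j x)).

(* vertices: inl i (customer class i < I), inr j (server pool j < J);
   adj i j = true means i ~ j *)
Definition gvalid (I J : nat) (v : nat + nat) : Prop :=
  match v with inl i => (i < I)%nat | inr j => (j < J)%nat end.

Definition gedge (I J : nat) (adj : nat -> nat -> bool) (v w : nat + nat) : Prop :=
  match v, w with
  | inl i, inr j => (i < I)%nat /\ (j < J)%nat /\ adj i j = true
  | inr j, inl i => (i < I)%nat /\ (j < J)%nat /\ adj i j = true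
  | _, _ => False
  end.

Definition gconnected (I J : nat) (adj : nat -> nat -> bool) : Prop :=
  forall v w, gvalid I J v -> gvalid I J w -> clos_refl_trans _ (gedge I J adj) v w.

Definition is_tree (I J : nat) (adj : nat -> nat -> bool) : Prop :=
  gconnected I J adj /\
  forall i0 j0, (i0 < I)%nat -> (j0 < J)%nat -> adj i0 j0 = true ->
    ~ gconnected I J (fun i j => andb (adj i j) (negb (andb (Nat.eqb i i0) (Nat.eqb j j0)))).

Definition G_spec (I J : nat) (adj : nat -> nat -> bool) (alpha beta : nat -> R)
    (psi : nat -> nat -> R) : Prop :=
  (forall i, (i < I)%nat -> rsum J (psi i) = alpha i) /\
  (forall j, (j < J)%nat -> rsum I (fun i => psi i j) = beta j) /\
  (forall i j, (i < I)%nat -> (j < J)%nat -> adj i j = false -> psi i j = 0).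

Lemma inhabited_mat : inhabited (nat -> nat -> R).
Proof. exact (inhabits (fun _ _ => 0)). Qed.

(* G(alpha,beta): the (unique, when G is a tree and e.alpha = e.beta) psi with
   row sums alpha, column sums beta, supported on the edges *)
Definition Gmap (I J : nat) (adj : nat -> nat -> bool) (alpha beta : nat -> R) : nat -> nat -> R :=
  epsilon inhabited_mat (G_spec I J adj alpha beta).

Definition inU (I J : nat) (uc us : nat -> R) : Prop :=
  (forall i, (i < I)%nat -> 0 <= uc i) /\ (forall j, (j < J)%nat -> 0 <= us j) /\
  rsum I uc = 1 /\ rsum J us = 1.

Definition Ghat (I J : nat) (adj : nat -> nat -> bool) (uc us x : nat -> R) : nat -> nat -> R :=
  Gmap I J adj (fun i => x i - ppart (edot I x) * uc i) (fun j => - (npart (edot I x) * us j)).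

Definition drift (I J : nat) (adj : nat -> nat -> bool) (gam ell : nat -> R) (mu : nat -> nat -> R)
    (x uc us : nat -> R) (i : nat) : R :=
  - rsum J (fun j => if adj i j then mu i j * Ghat I J adj uc us x i j else 0)
  - gam i * ppart (edot I x) * uc i + ell i.

(* controlled generator L^u f(x), with f given by its partials Df, D2f *)
Definition gen (I J : nat) (adj : nat -> nat -> bool) (lam gam ell : nat -> R) (mu : nat -> nat -> R)
    (Df : nat -> (nat -> R) -> R) (D2f : nat -> nat -> (nat -> R) -> R)
    (x uc us : nat -> R) : R :=
  rsum I (fun i => lam i * D2f i i x) +
  rsum I (fun i => drift I J adj gam ell mu x uc us i * Df i x).

Definition rcost (I J : nat) (m : R) (xi zeta : nat -> R) (x uc us : nat -> R) : R :=
  rpow (ppart (edot I x)) m * rsum I (fun i => xi i * rpow (uc i) m) +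
  rpow (npart (edot I x)) m * rsum J (fun j => zeta j * rpow (us j) m).

Definition cost := (nat -> R) -> (nat -> R) -> (nat -> R) -> R.

Definition continuous_RdU (I J : nat) (c : cost) : Prop :=
  forall x uc us, inRd I x -> inU I J uc us -> forall eps, eps > 0 -> exists eta, eta > 0 /\
    forall y vc vs, inRd I y -> inU I J vc vs ->
      norm I (vsub y x) + rsum I (fun i => Rabs (vc i - uc i)) + rsum J (fun j => Rabs (vs j - us j)) < eta ->
      Rabs (c y vc vs - c x uc us) < eps.

(* { x : min_u c(x,u) <= lvl }  (the min over the compact U is attained) *)
Definition minU_le (I J : nat) (c : cost) (lvl : R) : (nat -> R) -> Prop :=
  fun x => inRd I x /\ exists uc us, inU I J uc us /\ c x uc us <= lvl.

Definition HypothesisA (I J : nat) (adj : nat -> nat -> bool) (lam gam ell : nat -> R)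
    (mu : nat -> nat -> R) (r : cost) (K : (nat -> R) -> Prop) (h : cost) : Prop :=
  is_open I K /\
  (forall lvl, is_compact I (fun x => closure I K x /\ minU_le I J r lvl x)) /\
  (forall x uc us, inRd I x -> inU I J uc us -> 0 <= h x uc us) /\
  continuous_RdU I J h /\
  (forall lvl, is_compact I (minU_le I J h lvl)) /\
  exists (V : (nat -> R) -> R) Dv D2v,
    C2_with I V Dv D2v /\
    (forall x, inRd I x -> 0 <= V x) /\
    (forall lvl, is_compact I (fun x => inRd I x /\ V x <= lvl)) /\
    (forall x uc us, inRd I x -> inU I J uc us -> ~ K x ->
        gen I J adj lam gam ell mu Dv D2v x uc us <= 1 - h x uc us) /\
    (forall x uc us, inRd I x -> inU I J uc us -> K x ->
        gen I J adj lam gam ell mu Dv D2v x uc us <= 1 + r x uc us).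

Definition Kdelta (I : nat) (delta : R) : (nat -> R) -> Prop :=
  fun x => inRd I x /\ Rabs (edot I x) > delta * norm I x.

(* Main.v *)
Require Import Defs.
From Stdlib Require Import Reals Lra Lia Psatz Arith Bool Relations ClassicalEpsilon Classical FunctionalExtensionality.
Open Scope R_scope.

Module Basics.
Open Scope R_scope.

Lemma rsum_ext n f g : (forall k, (k < n)%nat -> f k = g k) -> rsum n f = rsum n g.
Proof. induction n; simpl; intros H; auto. rewrite IHn by (intros; apply H; lia). rewrite H by lia. auto. Qed.

Lemma rsum_plus n f g : rsum n (fun k => f k + g k) = rsum n f + rsum n g.
Proof. induction n; simpl; [lra|rewrite IHn; lra]. Qed.
Lemma rsum_minus n f g : rsum n (fun k => f k - g k) = rsum n f - rsum n g.
Proof. induction n; simpl; [lra|rewrite IHn; lra]. Qed.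
Lemma rsum_scal n c f : rsum n (fun k => c * f k) = c * rsum n f.
Proof. induction n; simpl; [lra|rewrite IHn; lra]. Qed.
Lemma rsum_scalr n c f : rsum n (fun k => f k * c) = rsum n f * c.
Proof. induction n; simpl; [lra|rewrite IHn; lra]. Qed.
Lemma rsum_opp n f : rsum n (fun k => - f k) = - rsum n f.
Proof. induction n; simpl; [lra|rewrite IHn; lra]. Qed.
Lemma rsum_0 n : rsum n (fun _ => 0) = 0.
Proof. induction n; simpl; [lra|rewrite IHn; lra]. Qed.
Lemma rsum_const n c : rsum n (fun _ => c) = INR n * c.
Proof. induction n; simpl rsum; [simpl; lra|rewrite IHn, S_INR; lra]. Qed.
Lemma rsum_le n f g : (forall k, (k < n)%nat -> f k <= g k) -> rsum n f <= rsum n g.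
Proof. induction n; simpl; intros H; [lra|].
  assert (rsum n f <= rsum n g) by (apply IHn; intros; apply H; lia).
  specialize (H n ltac:(lia)). lra. Qed.
Lemma rsum_nonneg n f : (forall k, (k < n)%nat -> 0 <= f k) -> 0 <= rsum n f.
Proof. intros H. rewrite <- (rsum_0 n). apply rsum_le. auto. Qed.
Lemma rsum_abs n f : Rabs (rsum n f) <= rsum n (fun k => Rabs (f k)).
Proof. induction n; simpl. rewrite Rabs_R0; lra.
  eapply Rle_trans; [apply Rabs_triang|lra]. Qed.
Lemma rsum_swap n m (f : nat -> nat -> R) :
  rsum n (fun i => rsum m (fun j => f i j)) = rsum m (fun j => rsum n (fun i => f i j)).
Proof. induction n; simpl. rewrite rsum_0; auto. rewrite IHn, <- rsum_plus. auto. Qed.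
Lemma rsum_single n f k0 : (k0 < n)%nat -> (forall k, (k < n)%nat -> k <> k0 -> f k = 0) -> rsum n f = f k0.
Proof. induction n; intros Hk H; [lia|simpl].
  destruct (Nat.eq_dec k0 n).
  - subst. rewrite (rsum_ext n f (fun _ => 0)), rsum_0. lra. intros; apply H; lia.
  - rewrite IHn; [|lia|intros; apply H; lia]. rewrite (H n) by lia. lra. Qed.
Lemma rsum_zero n f : (forall k, (k < n)%nat -> f k = 0) -> rsum n f = 0.
Proof. intros H. rewrite (rsum_ext n f (fun _ => 0)) by auto. apply rsum_0. Qed.
Lemma rsum_term_le n f k0 : (k0 < n)%nat -> (forall k, (k < n)%nat -> 0 <= f k) -> f k0 <= rsum n f.
Proof. induction n; intros Hk H; [lia|simpl].
  destruct (Nat.eq_dec k0 n).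
  - subst. assert (0 <= rsum n f) by (apply rsum_nonneg; intros; apply H; lia). lra.
  - assert (f k0 <= rsum n f) by (apply IHn; auto; lia). specialize (H n ltac:(lia)). lra. Qed.

Lemma rsum_CS n f : (rsum n f)^2 <= INR n * rsum n (fun k => f k ^ 2).
Proof. induction n; simpl rsum. simpl; lra.
  rewrite S_INR. set (Sm := rsum n f) in *. set (Q := rsum n (fun k => f k ^ 2)) in *.
  set (a := f n).
  destruct n. { unfold Sm, Q, a. simpl. nra. }
  assert (Hn : 0 < INR (S n)) by (apply lt_0_INR; lia).
  assert (INR (S n) * (2 * Sm * a) <= Sm ^ 2 + INR (S n) ^ 2 * a ^ 2) by (pose proof (pow2_ge_0 (Sm - INR (S n) * a)); nra).
  assert (2 * Sm * a <= Q + INR (S n) * a ^2).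
  { apply Rmult_le_reg_l with (INR (S n)); auto. nra. }
  change (rsum (S n) (fun k : nat => f k * (f k * 1))) with Q. nra. Qed.

Definition chi (P : Prop) : R := if excluded_middle_informative P then 1 else 0.
Lemma chi_T (P : Prop) : P -> chi P = 1.
Proof. unfold chi; destruct excluded_middle_informative; tauto. Qed.
Lemma chi_F (P : Prop) : ~ P -> chi P = 0.
Proof. unfold chi; destruct excluded_middle_informative; tauto. Qed.
Lemma chi_01 P : 0 <= chi P <= 1.
Proof. unfold chi; destruct excluded_middle_informative; lra. Qed.
Lemma chi_sq P : chi P * chi P = chi P.
Proof. unfold chi; destruct excluded_middle_informative; lra. Qed.

Definition N2 (d : nat) (x : nat -> R) := rsum d (fun i => x i * x i).
Lemma N2_nonneg d x : 0 <= N2 d x.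
Proof. apply rsum_nonneg; intros; nra. Qed.
Lemma norm_N2 d x : norm d x = sqrt (N2 d x).
Proof. reflexivity. Qed.
Lemma norm_nonneg d x : 0 <= norm d x.
Proof. apply sqrt_pos. Qed.
Lemma norm_sq d x : norm d x * norm d x = N2 d x.
Proof. apply sqrt_sqrt, N2_nonneg. Qed.
Lemma coord_sq_le d x k : (k < d)%nat -> x k * x k <= N2 d x.
Proof. intros. apply (rsum_term_le d (fun i => x i * x i)); auto. intros; nra. Qed.
Lemma coord_le_norm d x k : (k < d)%nat -> Rabs (x k) <= norm d x.
Proof. intros Hk. pose proof (coord_sq_le d x k Hk). pose proof (norm_sq d x).
  pose proof (norm_nonneg d x). pose proof (Rabs_pos (x k)).
  assert (Rabs (x k) * Rabs (x k) = x k * x k) by (rewrite <- Rabs_mult; apply Rabs_pos_eq; nra).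
  nra. Qed.
Lemma sum_abs_le_norm d x : rsum d (fun k => Rabs (x k)) <= INR d * norm d x.
Proof. rewrite <- rsum_const. apply rsum_le. intros; apply coord_le_norm; auto. Qed.
Lemma edot_le d x : Rabs (edot d x) <= INR d * norm d x.
Proof. eapply Rle_trans; [apply rsum_abs|apply sum_abs_le_norm]. Qed.
Lemma N2_le_sumabs2 d x : N2 d x <= (rsum d (fun k => Rabs (x k)))^2.
Proof. induction d; simpl. unfold N2; simpl; lra.
  unfold N2 in *; simpl. assert (0 <= rsum d (fun k => Rabs (x k))) by (apply rsum_nonneg; intros; apply Rabs_pos).
  pose proof (Rabs_pos (x d)). assert (Rabs (x d) * Rabs (x d) = x d * x d) by (rewrite <- Rabs_mult; apply Rabs_pos_eq; nra).
  nra. Qed.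
Lemma norm_le_sumabs d x : norm d x <= rsum d (fun k => Rabs (x k)).
Proof. assert (0 <= rsum d (fun k => Rabs (x k))) by (apply rsum_nonneg; intros; apply Rabs_pos).
  pose proof (N2_le_sumabs2 d x). pose proof (norm_sq d x). pose proof (norm_nonneg d x). nra. Qed.
Lemma N2_expand d x y t : rsum d (fun k => (t * x k - y k) * (t * x k - y k)) =
  t * t * N2 d x - 2 * t * rsum d (fun k => x k * y k) + N2 d y.
Proof. unfold N2. induction d; simpl. lra. rewrite IHd. lra. Qed.
Lemma N2_zero d x : N2 d x = 0 -> forall k, (k < d)%nat -> x k = 0.
Proof. intros H k Hk. pose proof (coord_sq_le d x k Hk). nra. Qed.
Lemma CS_dot d x y : rsum d (fun k => x k * y k) <= norm d x * norm d y.
Proof.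
  set (a := norm d x). set (b := norm d y).
  assert (Ha : 0 <= a) by apply norm_nonneg. assert (Hb : 0 <= b) by apply norm_nonneg.
  assert (HA : a * a = N2 d x) by apply norm_sq. assert (HB : b * b = N2 d y) by apply norm_sq.
  destruct (Req_dec a 0) as [Ha0|Ha0].
  { rewrite rsum_zero. nra. intros k Hk. rewrite (N2_zero d x) by (auto; nra). lra. }
  destruct (Req_dec b 0) as [Hb0|Hb0].
  { rewrite rsum_zero. nra. intros k Hk. rewrite (N2_zero d y) by (auto; nra). lra. }
  pose proof (N2_expand d x y (b / a)).
  assert (0 <= rsum d (fun k => (b / a * x k - y k) * (b / a * x k - y k))) by (apply rsum_nonneg; intros; apply Rle_0_sqr).
  assert (b / a * (b / a) * N2 d x = b * b) by (rewrite <- HA; field; auto).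
  set (c := rsum d (fun k => x k * y k)) in *.
  assert (2 * (b / a) * c <= 2 * (b * b)) by nra.
  assert (2 * (b / a) * c * a = 2 * b * c) by (field; auto).
  assert (2 * b * c <= 2 * (b * b) * a) by (rewrite <- H3; apply Rmult_le_compat_r; lra).
  assert (c <= b * a) by (apply Rmult_le_reg_l with (2 * b); nra). lra. Qed.
Lemma norm_triang d x y : norm d (fun k => x k + y k) <= norm d x + norm d y.
Proof.
  assert (N2 d (fun k => x k + y k) = N2 d x + 2 * rsum d (fun k => x k * y k) + N2 d y).
  { unfold N2. induction d; simpl. lra. rewrite IHd. lra. }
  pose proof (CS_dot d x y).
  pose proof (norm_sq d (fun k => x k + y k)). pose proof (norm_sq d x). pose proof (norm_sq d y).
  pose proof (norm_nonneg d (fun k => x k + y k)). pose proof (norm_nonneg d x). pose proof (norm_nonneg d y).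
  nra. Qed.

End Basics.
Import Basics.

Module Tree1.
Open Scope R_scope.

Definition vtx := (nat + nat)%type.
Definition vtx_dec (v w : vtx) : {v = w} + {v <> w}.
Proof. decide equality; apply Nat.eq_dec. Defined.

Lemma least_ex (P : nat -> Prop) : (exists n, P n) -> exists n, P n /\ forall k, P k -> (n <= k)%nat.
Proof. intros [n Hn]. revert Hn. induction n as [n IH] using (well_founded_induction Wf_nat.lt_wf).
  intros Hn. destruct (classic (exists k, (k < n)%nat /\ P k)) as [[k [Hk Pk]]|H].
  - apply (IH k Hk Pk).
  - exists n. split; auto. intros k Pk. destruct (le_lt_dec n k); auto. exfalso; apply H; eauto. Qed.

Lemma crt_sym_of {A} (R : A -> A -> Prop) : (forall x y, R x y -> R y x) ->
  forall x y, clos_refl_trans A R x y -> clos_refl_trans A R y x.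
Proof. intros Hs x y H. induction H. apply rt_step; auto. apply rt_refl. eapply rt_trans; eauto. Qed.

Section Rooted.
Variables (I J : nat) (adj : nat -> nat -> bool).
Hypothesis HJ : (1 <= J)%nat.
Hypothesis Hconn : gconnected I J adj.

Definition root : vtx := inr 0%nat.
Definition valid (v : vtx) := gvalid I J v.
Definition E (v w : vtx) := gedge I J adj v w.

Lemma E_sym v w : E v w -> E w v.
Proof. unfold E, gedge; destruct v, w; tauto. Qed.
Lemma E_valid v w : E v w -> valid v /\ valid w.
Proof. unfold E, gedge, valid, gvalid; destruct v, w; tauto. Qed.
Lemma root_valid : valid root.
Proof. unfold valid, root, gvalid. lia. Qed.

Fixpoint reach (n : nat) (v : vtx) : Prop :=
  match n with O => v = root | S n => exists w, E v w /\ reach n w end.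

Lemma reach_ex v : valid v -> exists n, reach n v.
Proof. intros Hv. pose proof (Hconn v root Hv root_valid) as H.
  apply clos_rt_rt1n in H. remember root as r. clear Hv. induction H. subst. exists O; reflexivity.
  destruct (IHclos_refl_trans_1n Heqr) as [n Hn]. exists (S n). simpl; eauto. Qed.

Definition depth (v : vtx) : nat :=
  epsilon (inhabits O) (fun n => reach n v /\ forall k, reach k v -> (n <= k)%nat).

Lemma depth_spec v : valid v -> reach (depth v) v /\ forall k, reach k v -> (depth v <= k)%nat.
Proof. intros Hv. unfold depth. apply (epsilon_spec (inhabits O) (fun n => reach n v /\ forall k, reach k v -> (n <= k)%nat)).
  apply least_ex, reach_ex; auto. Qed.

Lemma depth_root : depth root = O.
Proof. pose proof (depth_spec root root_valid) as [_ H]. specialize (H O eq_refl). lia. Qed.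
Lemma depth0 v : valid v -> depth v = O -> v = root.
Proof. intros Hv H. pose proof (depth_spec v Hv) as [H1 _]. rewrite H in H1. exact H1. Qed.

Lemma parent_ex v : valid v -> v <> root -> exists w, E v w /\ S (depth w) = depth v.
Proof. intros Hv Hr. pose proof (depth_spec v Hv) as [H1 H2].
  destruct (depth v) as [|n] eqn:Hd. { exfalso; apply Hr; apply depth0; auto. }
  destruct H1 as [w [Hw Hrw]]. exists w. split; auto.
  destruct (E_valid _ _ Hw) as [_ Hwv]. pose proof (depth_spec w Hwv) as [H3 H4].
  specialize (H4 n Hrw). assert (reach (S (depth w)) v) by (simpl; eauto).
  specialize (H2 _ H). lia. Qed.

Definition par (v : vtx) : vtx :=
  epsilon (inhabits root) (fun w => (v = root /\ w = root) \/ (v <> root /\ E v w /\ S (depth w) = depth v)).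

Lemma par_root : par root = root.
Proof. unfold par. 
  pose proof (epsilon_spec (inhabits root) (fun w => (root = root /\ w = root) \/ (root <> root /\ E root w /\ S (depth w) = depth root))) as H.
  destruct H as [[_ H]|[H _]]; auto. exists root; auto. congruence. Qed.

Lemma par_spec v : valid v -> v <> root -> E v (par v) /\ S (depth (par v)) = depth v.
Proof. intros Hv Hr. unfold par.
  pose proof (epsilon_spec (inhabits root) (fun w => (v = root /\ w = root) \/ (v <> root /\ E v w /\ S (depth w) = depth v))) as H.
  destruct H as [[H _]|[_ H]]; try congruence; auto.
  destruct (parent_ex v Hv Hr) as [w Hw]. exists w. right. auto. Qed.

Lemma par_valid v : valid v -> valid (par v).
Proof. intros Hv. destruct (vtx_dec v root). subst; rewrite par_root; apply root_valid.
  apply (E_valid v); apply par_spec; auto. Qed.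

Lemma par_depth_le v : valid v -> (depth (par v) <= depth v)%nat.
Proof. intros Hv. destruct (vtx_dec v root). subst; rewrite par_root; lia.
  pose proof (par_spec v Hv n). lia. Qed.

Definition iterp (n : nat) (v : vtx) := Nat.iter n par v.

Lemma iterp_valid n v : valid v -> valid (iterp n v).
Proof. induction n; simpl; auto. intros; apply par_valid; auto. Qed.
Lemma iterp_S n v : iterp (S n) v = iterp n (par v).
Proof. unfold iterp. rewrite <- Nat.iter_succ_r. reflexivity. Qed.
Lemma iterp_depth_le n v : valid v -> (depth (iterp n v) <= depth v)%nat.
Proof. intros Hv. induction n; simpl. lia. eapply Nat.le_trans; [apply par_depth_le, iterp_valid; auto|auto]. Qed.
Lemma iterp_depth_lt n v : valid v -> v <> root -> (depth (iterp (S n) v) < depth v)%nat.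
Proof. intros Hv Hr. rewrite iterp_S. pose proof (iterp_depth_le n (par v) (par_valid v Hv)).
  pose proof (par_spec v Hv Hr). lia. Qed.
Lemma iterp_add a b v : iterp (a + b) v = iterp a (iterp b v).
Proof. unfold iterp. apply Nat.iter_add. Qed.

Definition desc (k v : vtx) := exists n, iterp n k = v.

Lemma desc_refl v : desc v v.
Proof. exists O; reflexivity. Qed.
Lemma desc_trans a b c : desc a b -> desc b c -> desc a c.
Proof. intros [n Hn] [m Hm]. exists (m + n)%nat. rewrite iterp_add, Hn; auto. Qed.
Lemma desc_depth k v : valid k -> desc k v -> (depth v <= depth k)%nat.
Proof. intros Hk [n Hn]. subst. apply iterp_depth_le; auto. Qed.
Lemma desc_valid k v : valid k -> desc k v -> valid v.
Proof. intros Hk [n Hn]. subst. apply iterp_valid; auto. Qed.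
Lemma desc_par_self k : desc k (par k).
Proof. exists 1%nat; reflexivity. Qed.

Lemma desc_par k v : k <> v -> (desc k v <-> desc (par k) v).
Proof. intros Hkv. split.
  - intros [n Hn]. destruct n. simpl in Hn; congruence. exists n. rewrite <- iterp_S; auto.
  - intros [n Hn]. exists (S n). rewrite iterp_S; auto. Qed.

Lemma not_desc_par k : valid k -> k <> root -> ~ desc (par k) k.
Proof. intros Hk Hr [n Hn]. pose proof (iterp_depth_lt n k Hk Hr). rewrite iterp_S, Hn in H. lia. Qed.

Lemma desc_antisym a b : valid a -> desc a b -> desc b a -> a = b.
Proof. intros Ha [n Hn] [m Hm]. destruct n. exact Hn.
  destruct (vtx_dec a root) as [e|n0]. { rewrite e in *. assert (iterp (S n) root = root).
    { clear Hn Hm. induction n. simpl; apply par_root. rewrite iterp_S, par_root; auto. }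
    congruence. }
  pose proof (iterp_depth_lt n a Ha n0). rewrite Hn in H.
  assert (valid b) by (rewrite <- Hn; apply iterp_valid; auto).
  pose proof (iterp_depth_le m b H0). rewrite Hm in H1. lia. Qed.

Lemma desc_chain k a b : desc k a -> desc k b -> desc a b \/ desc b a.
Proof. intros [n Hn] [m Hm]. destruct (le_lt_dec n m).
  - left. exists (m - n)%nat. rewrite <- Hn, <- iterp_add. replace (m - n + n)%nat with m by lia. auto.
  - right. exists (n - m)%nat. rewrite <- Hm, <- iterp_add. replace (n - m + m)%nat with n by lia. auto. Qed.

Lemma child_unique k c c' : valid c -> valid c' -> c <> root -> c' <> root -> par c = par c' ->
  desc k c -> desc k c' -> c = c'.
Proof. intros Hc Hc' Hr Hr' Hp H1 H2.
  assert (depth c = depth c') by (pose proof (par_spec c Hc Hr); pose proof (par_spec c' Hc' Hr'); rewrite Hp in *; lia).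
  destruct (desc_chain k c c' H1 H2) as [[n Hn]|[n Hn]].
  - destruct n. auto. pose proof (iterp_depth_lt n c Hc Hr). rewrite Hn in H0. lia.
  - destruct n. auto. pose proof (iterp_depth_lt n c' Hc' Hr'). rewrite Hn in H0. lia. Qed.

Lemma desc_root v : valid v -> desc v root.
Proof. intros Hv. exists (depth v). remember (depth v) as n. revert v Hv Heqn.
  induction n; intros v Hv Hd. simpl. apply depth0; auto.
  rewrite iterp_S. destruct (vtx_dec v root). subst. rewrite par_root.
  rewrite depth_root in Hd. lia.
  apply IHn. apply par_valid; auto. pose proof (par_spec v Hv n0). lia. Qed.

Lemma desc_child w v : valid w -> w <> v -> desc w v -> exists c, par c = v /\ c <> v /\ desc w c /\ valid c.
Proof. intros Hw Hne Hd.
  destruct (least_ex (fun n => iterp n w = v) Hd) as [n [Hn Hmin]].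
  destruct n. simpl in Hn; congruence.
  exists (iterp n w). repeat split.
  - exact Hn.
  - intros H. specialize (Hmin n H). lia.
  - exists n; auto.
  - apply iterp_valid; auto. Qed.

End Rooted.

End Tree1.
Import Tree1.

Module Tree2.
Open Scope R_scope.

Section Flows.
Variables (I J : nat) (adj : nat -> nat -> bool).
Hypothesis HJ : (1 <= J)%nat.
Hypothesis Htree : is_tree I J adj.

Let Hconn : gconnected I J adj := proj1 Htree.

Notation valid := (valid I J).
Notation E := (E I J adj).
Notation par := (par I J adj).
Notation desc := (desc I J adj).

Lemma E_inl i w : E (inl i) w -> exists j, w = inr j /\ (i < I)%nat /\ (j < J)%nat /\ adj i j = true.
Proof. unfold Tree1.E, gedge. destruct w; [tauto|]. intros; eauto. Qed.
Lemma E_inr j w : E (inr j) w -> exists i, w = inl i /\ (i < I)%nat /\ (j < J)%nat /\ adj i j = true.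
Proof. unfold Tree1.E, gedge. destruct w; [|tauto]. intros; eauto. Qed.

Lemma valid_inl i : (i < I)%nat -> valid (inl i).
Proof. unfold Tree1.valid; simpl; auto. Qed.
Lemma valid_inr j : (j < J)%nat -> valid (inr j).
Proof. unfold Tree1.valid; simpl; auto. Qed.

Lemma par_inl i : (i < I)%nat -> exists j, par (inl i) = inr j /\ (j < J)%nat /\ adj i j = true.
Proof. intros Hi. destruct (par_spec I J adj HJ Hconn (inl i) (valid_inl i Hi)) as [H _]. discriminate.
  apply E_inl in H. destruct H as [j [H1 [_ [H2 H3]]]]. eauto. Qed.
Lemma par_inr j : (j < J)%nat -> j <> 0%nat -> exists i, par (inr j) = inl i /\ (i < I)%nat /\ adj i j = true.
Proof. intros Hj Hj0. destruct (par_spec I J adj HJ Hconn (inr j) (valid_inr j Hj)) as [H _].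
  unfold root; congruence.
  apply E_inr in H. destruct H as [i [H1 [H2 [_ H3]]]]. eauto. Qed.

Lemma par_excl i j : (i < I)%nat -> par (inl i) = inr j -> par (inr j) <> inl i.
Proof. intros Hi H1 H2. apply (not_desc_par I J adj HJ Hconn (inl i) (valid_inl i Hi)). discriminate.
  rewrite H1. exists 1%nat. simpl. rewrite H2. reflexivity. Qed.

Lemma tree_edges i j : (i < I)%nat -> (j < J)%nat -> adj i j = true ->
  par (inl i) = inr j \/ par (inr j) = inl i.
Proof. intros Hi Hj Ha. apply NNPP. intros Hn. apply not_or_and in Hn. destruct Hn as [N1 N2].
  apply (proj2 Htree i j Hi Hj Ha).
  set (adj' := fun i1 j1 => andb (adj i1 j1) (negb (andb (Nat.eqb i1 i) (Nat.eqb j1 j)))).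
  assert (Hr : forall n v, valid v -> (depth I J adj v <= n)%nat -> clos_refl_trans _ (gedge I J adj') v root).
  { induction n; intros v Hv Hd.
    - assert (v = root) by (apply (depth0 I J adj HJ Hconn); auto; lia). subst; apply rt_refl.
    - destruct (vtx_dec v root). subst; apply rt_refl.
      destruct (par_spec I J adj HJ Hconn v Hv n0) as [HE HD].
      eapply rt_trans; [apply rt_step|apply IHn; [apply (par_valid I J adj HJ Hconn v Hv)|lia]].
      destruct v as [i1|j1].
      + apply E_inl in HE. destruct HE as [j1 [He [Hi1 [Hj1 Ha1]]]]. rewrite He.
        simpl. repeat split; auto. unfold adj'. rewrite Ha1. simpl.
        destruct (Nat.eqb_spec i1 i); destruct (Nat.eqb_spec j1 j); simpl; auto. subst. congruence.
      + apply E_inr in HE. destruct HE as [i1 [He [Hi1 [Hj1 Ha1]]]]. rewrite He.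
        simpl. repeat split; auto. unfold adj'. rewrite Ha1. simpl.
        destruct (Nat.eqb_spec i1 i); destruct (Nat.eqb_spec j1 j); simpl; auto. subst. congruence. }
  intros v w Hv Hw. eapply rt_trans. apply (Hr _ v Hv (le_n _)).
  apply crt_sym_of. { intros x y; destruct x, y; simpl; tauto. } apply (Hr _ w Hw (le_n _)). Qed.

Lemma child_dec (v w : vtx) (f : nat -> vtx) (n : nat) :
  valid v -> valid w ->
  (forall t, f t <> v) ->
  (forall t t', (t < n)%nat -> (t' < n)%nat -> f t = f t' -> t = t') ->
  (forall t, (t < n)%nat -> valid (f t)) ->
  (forall c, valid c -> par c = v -> c <> v -> exists t, (t < n)%nat /\ c = f t) ->
  chi (desc w v) = chi (w = v) + rsum n (fun t => chi (par (f t) = v) * chi (desc w (f t))).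
Proof. intros Hv Hw Hfv Hinj Hfval Hsurj.
  destruct (vtx_dec w v) as [e|ne].
  - subst w. rewrite chi_T by apply desc_refl. rewrite chi_T by auto. rewrite rsum_zero. lra.
    intros t Ht. destruct (classic (par (f t) = v)) as [Hp|Hp].
    + rewrite (chi_F (desc v (f t))). lra. intros Hd.
      apply (Hfv t). symmetry. apply (desc_antisym I J adj HJ Hconn); auto. rewrite <- Hp. apply desc_par_self.
    + rewrite chi_F by auto. lra.
  - rewrite (chi_F (w = v)) by auto.
    destruct (classic (desc w v)) as [Hd|Hd].
    + rewrite chi_T by auto. destruct (desc_child I J adj HJ Hconn w v Hw ne Hd) as [c [Hc1 [Hc2 [Hc3 Hc4]]]].
      destruct (Hsurj c Hc4 Hc1 Hc2) as [t0 [Ht0 Hct]]. subst c.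
      rewrite (rsum_single n _ t0 Ht0). rewrite !chi_T; auto. lra.
      intros t Ht Hne. destruct (classic (par (f t) = v /\ desc w (f t))) as [[H1 H2]|H1].
      * exfalso. apply Hne. apply Hinj; auto.
        apply (child_unique I J adj HJ Hconn w); auto.
        { intros e. apply (Hfv t). rewrite <- H1, e. symmetry; apply par_root. }
        { intros e. apply (Hfv t0). rewrite <- Hc1, e. symmetry; apply par_root. }
        congruence.
      * apply not_and_or in H1. destruct H1; [rewrite (chi_F (par (f t) = v))|rewrite (chi_F (desc w (f t)))]; auto; lra.
    + rewrite chi_F by auto. rewrite rsum_zero. lra. intros t Ht.
      destruct (classic (par (f t) = v /\ desc w (f t))) as [[H1 H2]|H1].
      * exfalso. apply Hd. eapply desc_trans; eauto. rewrite <- H1. apply desc_par_self.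
      * apply not_and_or in H1. destruct H1; [rewrite (chi_F (par (f t) = v))|rewrite (chi_F (desc w (f t)))]; auto; lra.
Qed.

Lemma dec_cust i w : (i < I)%nat -> valid w ->
  chi (desc w (inl i)) = chi (w = inl i) + rsum J (fun j => chi (par (inr j) = inl i) * chi (desc w (inr j))).
Proof. intros Hi Hw. apply (child_dec (inl i) w inr J); auto.
  all: try (intros t H; discriminate); try (intros t t' _ _ H; congruence).
  intros c Hc Hp Hne. destruct c as [k|j]. 
  - destruct (par_inl k Hc) as [j [Hj _]]. congruence.
  - exists j. split; auto. Qed.

Lemma dec_serv j w : (j < J)%nat -> valid w ->
  chi (desc w (inr j)) = chi (w = inr j) + rsum I (fun k => chi (par (inl k) = inr j) * chi (desc w (inl k))).
Proof. intros Hj Hw. apply (child_dec (inr j) w inl I); auto.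
  all: try (intros t H; discriminate); try (intros t t' _ _ H; congruence).
  intros c Hc Hp Hne. destruct c as [k|j'].
  - exists k. split; auto.
  - destruct (Nat.eq_dec j' 0). subst. unfold root in Hp. 
    change (inr 0%nat) with root in Hp. rewrite (par_root I J adj) in Hp. unfold root in Hp. congruence.
    destruct (par_inr j' Hc n) as [i [Hi _]]. congruence. Qed.

Definition Lin (alpha beta : nat -> R) (g : vtx -> R) : R :=
  rsum I (fun k => g (inl k) * alpha k) - rsum J (fun j => g (inr j) * beta j).

Lemma Lin_ext a b g1 g2 : (forall w, valid w -> g1 w = g2 w) -> Lin a b g1 = Lin a b g2.
Proof. intros H. unfold Lin. rewrite (rsum_ext I (fun k => g1 (inl k) * a k) (fun k => g2 (inl k) * a k)).
  rewrite (rsum_ext J (fun j => g1 (inr j) * b j) (fun j => g2 (inr j) * b j)). auto.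
  intros; rewrite H; auto; apply valid_inr; auto. intros; rewrite H; auto; apply valid_inl; auto. Qed.
Lemma Lin_plus a b g1 g2 : Lin a b (fun w => g1 w + g2 w) = Lin a b g1 + Lin a b g2.
Proof. unfold Lin.
  rewrite (rsum_ext I _ (fun k => g1 (inl k) * a k + g2 (inl k) * a k)) by (intros; ring).
  rewrite (rsum_ext J _ (fun k => g1 (inr k) * b k + g2 (inr k) * b k)) by (intros; ring).
  rewrite !rsum_plus. ring. Qed.
Lemma Lin_scal a b c g : Lin a b (fun w => c * g w) = c * Lin a b g.
Proof. unfold Lin.
  rewrite (rsum_ext I _ (fun k => c * (g (inl k) * a k))) by (intros; ring).
  rewrite (rsum_ext J _ (fun k => c * (g (inr k) * b k))) by (intros; ring).
  rewrite !rsum_scal. ring. Qed.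
Lemma Lin_opp a b g : Lin a b (fun w => - g w) = - Lin a b g.
Proof. rewrite (Lin_ext a b _ (fun w => -1 * g w)) by (intros; ring). rewrite Lin_scal; ring. Qed.
Lemma Lin_minus a b g1 g2 : Lin a b (fun w => g1 w - g2 w) = Lin a b g1 - Lin a b g2.
Proof. unfold Rminus. rewrite Lin_plus, Lin_opp. auto. Qed.
Lemma Lin_sum a b n (c : nat -> R) (g : nat -> vtx -> R) :
  Lin a b (fun w => rsum n (fun t => c t * g t w)) = rsum n (fun t => c t * Lin a b (g t)).
Proof. induction n; simpl.
  - unfold Lin. rewrite !rsum_zero; auto; intros; ring.
  - rewrite Lin_plus, IHn, Lin_scal. auto. Qed.
Lemma Lin_inl a b i : (i < I)%nat -> Lin a b (fun w => chi (w = inl i)) = a i.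
Proof. intros Hi. unfold Lin. rewrite (rsum_single I _ i Hi). rewrite rsum_zero. rewrite chi_T; auto; ring.
  intros; rewrite chi_F by discriminate; ring. intros k _ Hk. rewrite chi_F; [ring|congruence]. Qed.
Lemma Lin_inr a b j : (j < J)%nat -> Lin a b (fun w => chi (w = inr j)) = - b j.
Proof. intros Hj. unfold Lin. rewrite (rsum_single J _ j Hj). rewrite rsum_zero. rewrite chi_T; auto; ring.
  intros; rewrite chi_F by discriminate; ring. intros k _ Hk. rewrite chi_F; [ring|congruence]. Qed.
Lemma Lin_one a b : Lin a b (fun _ => 1) = rsum I a - rsum J b.
Proof. unfold Lin. rewrite (rsum_ext I _ a), (rsum_ext J _ b); auto; intros; ring. Qed.

Definition Sf (a b : nat -> R) (v : vtx) : R := Lin a b (fun w => chi (desc w v)).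

Definition flow (a b : nat -> R) (i j : nat) : R :=
  chi (par (inl i) = inr j) * Sf a b (inl i) - chi (par (inr j) = inl i) * Sf a b (inr j).

Lemma Sf_cust a b i : (i < I)%nat ->
  Sf a b (inl i) - rsum J (fun j => chi (par (inr j) = inl i) * Sf a b (inr j)) = a i.
Proof. intros Hi. unfold Sf. rewrite <- Lin_sum, <- Lin_minus.
  rewrite <- (Lin_inl a b i Hi). apply Lin_ext. intros w Hw. rewrite dec_cust; auto. ring. Qed.

Lemma Sf_serv a b j : (j < J)%nat ->
  rsum I (fun k => chi (par (inl k) = inr j) * Sf a b (inl k)) - Sf a b (inr j) = b j.
Proof. intros Hj. unfold Sf. rewrite <- Lin_sum, <- Lin_minus.
  replace (b j) with (- - b j) by ring. rewrite <- (Lin_inr a b j Hj), <- Lin_opp. apply Lin_ext. intros w Hw. rewrite dec_serv; auto. ring. Qed.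

Lemma Sf_root a b : rsum I a = rsum J b -> Sf a b root = 0.
Proof. intros H. unfold Sf. rewrite (Lin_ext a b _ (fun _ => 1)). rewrite Lin_one; lra.
  intros w Hw. rewrite chi_T; auto. apply (desc_root I J adj HJ Hconn); auto. Qed.

Lemma flow_spec a b : rsum I a = rsum J b -> G_spec I J adj a b (flow a b).
Proof. intros Hab. split; [|split].
  - intros i Hi. unfold flow. rewrite rsum_minus, rsum_scalr.
    destruct (par_inl i Hi) as [j0 [Hj0 [Hj0J _]]].
    rewrite (rsum_single J _ j0 Hj0J). rewrite chi_T by auto.
    rewrite <- (Sf_cust a b i Hi). ring_simplify. auto.
    intros j Hj Hne. rewrite chi_F; auto. congruence.
  - intros j Hj. unfold flow. rewrite rsum_minus.
    destruct (Nat.eq_dec j 0) as [e|ne].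
    + subst j. rewrite (rsum_zero I (fun i => chi (par (inr 0%nat) = inl i) * _)).
      2:{ intros i Hi. rewrite chi_F. ring. change (inr 0%nat) with root. rewrite par_root. discriminate. }
      pose proof (Sf_serv a b 0%nat Hj). pose proof (Sf_root a b Hab). unfold root in H0. lra.
    + destruct (par_inr j Hj ne) as [i0 [Hi0 [Hi0I _]]].
      rewrite (rsum_single I (fun i => chi (par (inr j) = inl i) * _) i0 Hi0I). rewrite chi_T by auto.
      rewrite <- (Sf_serv a b j Hj). ring.
      intros i Hi Hne. rewrite chi_F. ring. congruence.
  - intros i j Hi Hj Ha. unfold flow. rewrite !chi_F. ring.
    + intros H. destruct (par_inr j Hj) as [i' [H1 [_ H2]]]. intros e; subst j. 
      change (inr 0%nat) with root in H. rewrite par_root in H. discriminate.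
      rewrite H in H1. inversion H1. subst. congruence.
    + intros H. destruct (par_inl i Hi) as [j' [H1 [_ H2]]]. rewrite H in H1. inversion H1. subst. congruence.
Qed.

Lemma Gmap_spec a b : rsum I a = rsum J b -> G_spec I J adj a b (Gmap I J adj a b).
Proof. intros H. unfold Gmap. apply epsilon_spec. exists (flow a b). apply flow_spec; auto. Qed.


Section Value.
Variables (a b : nat -> R) (psi : nat -> nat -> R).
Hypothesis Hpsi : G_spec I J adj a b psi.

Lemma Sf_psi v : Sf a b v = rsum I (fun k => rsum J (fun j =>
   psi k j * (chi (desc (inl k) v) - chi (desc (inr j) v)))).
Proof. destruct Hpsi as [H1 [H2 H3]]. unfold Sf, Lin.
  rewrite (rsum_ext I (fun k => chi (desc (inl k) v) * a k) (fun k => rsum J (fun j => chi (desc (inl k) v) * psi k j))).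
  2:{ intros k Hk. rewrite <- H1 by auto. rewrite <- rsum_scal. auto. }
  rewrite (rsum_ext J (fun j => chi (desc (inr j) v) * b j) (fun j => rsum I (fun k => chi (desc (inr j) v) * psi k j))).
  2:{ intros j Hj. rewrite <- H2 by auto. rewrite <- rsum_scal. auto. }
  rewrite <- (rsum_swap I J (fun k j => chi (desc (inr j) v) * psi k j)).
  rewrite <- rsum_minus. apply rsum_ext. intros k Hk. rewrite <- rsum_minus. apply rsum_ext. intros j Hj. ring. Qed.

Lemma pointwise k j v : (k < I)%nat -> (j < J)%nat ->
  psi k j * (chi (desc (inl k) v) - chi (desc (inr j) v)) =
  psi k j * (chi (par (inl k) = inr j) * chi (inl k = v) - chi (par (inr j) = inl k) * chi (inr j = v)).
Proof. intros Hk Hj. destruct Hpsi as [_ [_ H3]].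
  destruct (adj k j) eqn:Ha.
  2:{ rewrite H3 by auto. ring. }
  destruct (tree_edges k j Hk Hj Ha) as [Hp|Hp].
  - rewrite (chi_F (par (inr j) = inl k)) by (apply par_excl; auto). rewrite (chi_T (par (inl k) = inr j)) by auto.
    destruct (vtx_dec (inl k) v) as [e|ne].
    + subst v. rewrite (chi_T (desc (inl k) (inl k))) by apply desc_refl. rewrite (chi_T (inl k = inl k)) by auto.
      rewrite chi_F. ring. rewrite <- Hp. apply (not_desc_par I J adj HJ Hconn). apply valid_inl; auto. discriminate.
    + rewrite (chi_F (inl k = v)) by auto. 
      assert (desc (inl k) v <-> desc (inr j) v) by (rewrite <- Hp; apply desc_par; auto).
      destruct (classic (desc (inl k) v)). rewrite !chi_T by tauto. ring. rewrite !chi_F by tauto. ring.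
  - rewrite (chi_F (par (inl k) = inr j)) by (intros H; apply (par_excl k j Hk H); auto). rewrite (chi_T (par (inr j) = inl k)) by auto.
    destruct (vtx_dec (inr j) v) as [e|ne].
    + subst v. rewrite (chi_T (desc (inr j) (inr j))) by apply desc_refl. rewrite (chi_T (inr j = inr j)) by auto.
      rewrite chi_F. ring. rewrite <- Hp. apply (not_desc_par I J adj HJ Hconn). apply valid_inr; auto.
      intros e. rewrite e in Hp. rewrite par_root in Hp. discriminate.
    + rewrite (chi_F (inr j = v)) by auto.
      assert (desc (inr j) v <-> desc (inl k) v) by (rewrite <- Hp; apply desc_par; auto).
      destruct (classic (desc (inl k) v)). rewrite !chi_T by tauto. ring. rewrite !chi_F by tauto. ring.
Qed.

Lemma Sf_psi2 v : Sf a b v = rsum I (fun k => rsum J (fun j =>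
   psi k j * (chi (par (inl k) = inr j) * chi (inl k = v) - chi (par (inr j) = inl k) * chi (inr j = v)))).
Proof. rewrite Sf_psi. apply rsum_ext; intros k Hk; apply rsum_ext; intros j Hj; apply pointwise; auto. Qed.

Lemma Sf_inl_val i j : (i < I)%nat -> par (inl i) = inr j -> Sf a b (inl i) = psi i j.
Proof. intros Hi Hp. rewrite Sf_psi2.
  destruct (par_inl i Hi) as [j' [Hj' [HjJ _]]]. rewrite Hp in Hj'. inversion Hj'. subst j'.
  rewrite (rsum_single I _ i Hi).
  - rewrite (rsum_single J _ j HjJ). rewrite chi_T, chi_T by auto. rewrite (chi_F (inr j = inl i)) by discriminate. ring.
    intros j1 Hj1 Hne. rewrite (chi_F (par (inl i) = inr j1)) by congruence. rewrite (chi_F (inr j1 = inl i)) by discriminate. ring.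
  - intros k Hk Hne. apply rsum_zero. intros j1 Hj1. rewrite (chi_F (inl k = inl i)) by congruence.
    rewrite (chi_F (inr j1 = inl i)) by discriminate. ring. Qed.

Lemma Sf_inr_val i j : (j < J)%nat -> par (inr j) = inl i -> Sf a b (inr j) = - psi i j.
Proof. intros Hj Hp.
  assert (Hj0 : j <> 0%nat). { intros e; subst. change (inr 0%nat) with root in Hp. rewrite par_root in Hp. discriminate. }
  destruct (par_inr j Hj Hj0) as [i' [Hi' [HiI _]]]. rewrite Hp in Hi'. inversion Hi'. subst i'.
  rewrite Sf_psi2. rewrite (rsum_single I _ i HiI).
  - rewrite (rsum_single J _ j Hj). rewrite (chi_F (inl i = inr j)) by discriminate. rewrite (chi_T (par (inr j) = inl i)), (chi_T (inr j = inr j)) by auto. ring.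
    intros j1 Hj1 Hne. rewrite (chi_F (inl i = inr j)) by discriminate. rewrite (chi_F (inr j1 = inr j)) by congruence. ring.
  - intros k Hk Hne. apply rsum_zero. intros j1 Hj1. rewrite (chi_F (inl k = inr j)) by discriminate.
    destruct (Nat.eq_dec j1 j). subst. rewrite (chi_F (par (inr j) = inl k)) by congruence. ring.
    rewrite (chi_F (inr j1 = inr j)) by congruence. ring. Qed.

Lemma G_value i j : (i < I)%nat -> (j < J)%nat -> psi i j = flow a b i j.
Proof. intros Hi Hj. unfold flow. destruct Hpsi as [_ [_ H3]].
  destruct (adj i j) eqn:Ha.
  - destruct (tree_edges i j Hi Hj Ha) as [Hp|Hp].
    + rewrite (chi_F (par (inr j) = inl i)) by (apply par_excl; auto). rewrite chi_T by auto.
      rewrite (Sf_inl_val i j Hi Hp). ring.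
    + rewrite (chi_F (par (inl i) = inr j)) by (intros H; apply (par_excl i j Hi H); auto). rewrite chi_T by auto.
      rewrite (Sf_inr_val i j Hj Hp). ring.
  - rewrite H3 by auto. rewrite !chi_F. ring.
    + intros H. destruct (Nat.eq_dec j 0). subst. change (inr 0%nat) with root in H. rewrite par_root in H. discriminate.
      destruct (par_inr j Hj n) as [i' [H1 [_ H2]]]. rewrite H in H1. inversion H1. subst. congruence.
    + intros H. destruct (par_inl i Hi) as [j' [H1 [_ H2]]]. rewrite H in H1. inversion H1. subst. congruence.
Qed.
End Value.

Lemma Gmap_value a b i j : rsum I a = rsum J b -> (i < I)%nat -> (j < J)%nat ->
  Gmap I J adj a b i j = flow a b i j.
Proof. intros H Hi Hj. apply (G_value a b); auto. apply Gmap_spec; auto. Qed.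

End Flows.

End Tree2.
Import Tree2.

Module Drift.
Open Scope R_scope.

Lemma ppart_npart s : ppart s - npart s = s.
Proof. unfold ppart, npart, Rmax. destruct (Rle_dec s 0), (Rle_dec (-s) 0); lra. Qed.
Lemma ppart_nonneg s : 0 <= ppart s.
Proof. unfold ppart, Rmax. destruct (Rle_dec s 0); lra. Qed.
Lemma npart_nonneg s : 0 <= npart s.
Proof. unfold npart, Rmax. destruct (Rle_dec (-s) 0); lra. Qed.
Lemma ppart_npart_abs s : ppart s + npart s = Rabs s.
Proof. unfold ppart, npart, Rmax, Rabs. destruct (Rle_dec s 0), (Rle_dec (-s) 0), (Rcase_abs s); lra. Qed.

Section Drift.
Variables (I J : nat) (adj : nat -> nat -> bool) (gam ell : nat -> R) (mu : nat -> nat -> R).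
Hypothesis HJ : (1 <= J)%nat.
Hypothesis Htree : is_tree I J adj.
Hypothesis Hmu0 : forall i j, (i < I)%nat -> (j < J)%nat -> adj i j = false -> mu i j = 0.

Let Hconn : gconnected I J adj := proj1 Htree.
Notation par := (par I J adj).
Notation desc := (desc I J adj).

Definition mpar k := rsum J (fun j => chi (par (inl k) = inr j) * mu k j).
Definition npar j := rsum I (fun k => chi (par (inr j) = inl k) * mu k j).
Definition npar' k := rsum J (fun j => chi (par (inl k) = inr j) * npar j).
Definition Acoef k := npar' k - mpar k.
Definition Ek v k := chi (desc (par (inl k)) (inl v)).

Variables (x uc us : nat -> R).
Hypothesis HU : inU I J uc us.

Definition sx := edot I x.
Definition al k := x k - ppart sx * uc k.
Definition be j := - (npart sx * us j).

Lemma al_be : rsum I al = rsum J be.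
Proof. destruct HU as [_ [_ [H1 H2]]]. unfold al, be. rewrite rsum_minus, rsum_scal, rsum_opp, rsum_scal, H1, H2.
  pose proof (ppart_npart sx). unfold sx, edot in *. lra. Qed.

Notation Sfx := (Sf I J adj al be).

Lemma Ghat_flow i j : (i < I)%nat -> (j < J)%nat -> Ghat I J adj uc us x i j = flow I J adj al be i j.
Proof. intros Hi Hj. unfold Ghat. apply (Gmap_value I J adj HJ Htree); auto. apply al_be. Qed.

Definition Zv v := rsum I (fun k => chi (desc (inl k) (inl v)) * drift I J adj gam ell mu x uc us k).

Lemma drift_flow k : (k < I)%nat -> drift I J adj gam ell mu x uc us k =
  - rsum J (fun j => mu k j * flow I J adj al be k j) - gam k * ppart sx * uc k + ell k.
Proof. intros Hk. unfold drift. f_equal. f_equal. f_equal. apply rsum_ext. intros j Hj.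
  destruct (adj k j) eqn:Ha. rewrite Ghat_flow; auto. rewrite Hmu0; auto. ring. Qed.

Lemma flow_sum_cust k : (k < I)%nat -> rsum J (fun j => mu k j * flow I J adj al be k j) =
  mpar k * Sfx (inl k) - rsum J (fun j => chi (par (inr j) = inl k) * mu k j * Sfx (inr j)).
Proof. intros Hk. unfold flow, mpar. rewrite <- rsum_scalr, <- rsum_minus. apply rsum_ext. intros; ring. Qed.

Lemma chi_desc_cust k v : (k < I)%nat -> chi (desc (inl k) v) = chi (inl k = v) + chi (desc (par (inl k)) v).
Proof. intros Hk. destruct (vtx_dec (inl k) v) as [e|ne].
  - subst. rewrite chi_T by apply desc_refl. rewrite chi_T by auto. rewrite chi_F. ring.
    apply (not_desc_par I J adj HJ Hconn). apply valid_inl; auto. discriminate.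
  - rewrite (chi_F (inl k = v)) by auto. destruct (classic (desc (inl k) v)) as [Hd|Hd].
    + rewrite (chi_T (desc (inl k) v)) by exact Hd. rewrite (chi_T (desc (par (inl k)) v)) by (apply (desc_par I J adj (inl k) v ne); exact Hd). ring.
    + rewrite (chi_F (desc (inl k) v)) by exact Hd. rewrite (chi_F (desc (par (inl k)) v)) by (rewrite <- (desc_par I J adj (inl k) v ne); exact Hd). ring. Qed.

Lemma drift_dec v : (v < I)%nat ->
  Zv v = - mpar v * Sfx (inl v) + rsum I (fun k => Ek v k * Acoef k * Sfx (inl k))
         - rsum J (fun j => chi (desc (inr j) (inl v)) * npar j * be j)
         + rsum I (fun k => chi (desc (inl k) (inl v)) * (- gam k * ppart sx * uc k + ell k)).
Proof. intros Hv. unfold Zv.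
  rewrite (rsum_ext I _ (fun k => - (chi (desc (inl k) (inl v)) * (mpar k * Sfx (inl k)))
       + rsum J (fun j => chi (desc (inr j) (inl v)) * (chi (par (inr j) = inl k) * mu k j) * Sfx (inr j))
       + chi (desc (inl k) (inl v)) * (- gam k * ppart sx * uc k + ell k))).
  2:{ intros k Hk. rewrite drift_flow, flow_sum_cust by auto.
      assert (rsum J (fun j => chi (desc (inr j) (inl v)) * (chi (par (inr j) = inl k) * mu k j) * Sfx (inr j)) =
              chi (desc (inl k) (inl v)) * rsum J (fun j => chi (par (inr j) = inl k) * mu k j * Sfx (inr j))).
      { rewrite <- rsum_scal. apply rsum_ext. intros j Hj.
        destruct (classic (par (inr j) = inl k)) as [Hp|Hp].
        - assert (Hiff : desc (inr j) (inl v) <-> desc (inl k) (inl v)) by (rewrite <- Hp; apply desc_par; discriminate).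
          destruct (classic (desc (inl k) (inl v))) as [Hd|Hd].
          + rewrite (chi_T (desc (inr j) (inl v))) by tauto. rewrite (chi_T (desc (inl k) (inl v))) by tauto. ring.
          + rewrite (chi_F (desc (inr j) (inl v))) by tauto. rewrite (chi_F (desc (inl k) (inl v))) by tauto. ring.
        - rewrite (chi_F (par (inr j) = inl k)) by auto. ring. }
      rewrite H. ring. }
  rewrite !rsum_plus, rsum_opp. 
  rewrite (rsum_swap I J (fun k j => chi (desc (inr j) (inl v)) * (chi (par (inr j) = inl k) * mu k j) * Sfx (inr j))).
  rewrite (rsum_ext J _ (fun j => chi (desc (inr j) (inl v)) * npar j * Sfx (inr j))).
  2:{ intros j Hj. unfold npar. rewrite <- rsum_scal, <- rsum_scalr. apply rsum_ext; intros; ring. }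
  rewrite (rsum_ext J _ (fun j => chi (desc (inr j) (inl v)) * npar j *
       (rsum I (fun c => chi (par (inl c) = inr j) * Sfx (inl c)) - be j))).
  2:{ intros j Hj. pose proof (Sf_serv I J adj HJ Htree al be j Hj). f_equal. lra. }
  rewrite (rsum_ext J _ (fun j => rsum I (fun c => chi (desc (inr j) (inl v)) * npar j * chi (par (inl c) = inr j) * Sfx (inl c))
        - chi (desc (inr j) (inl v)) * npar j * be j)).
  2:{ intros j Hj. rewrite Rmult_minus_distr_l, <- rsum_scal. f_equal. apply rsum_ext; intros; ring. }
  rewrite rsum_minus, <- (rsum_swap I J).
  rewrite (rsum_ext I (fun c => rsum J _) (fun c => chi (desc (par (inl c)) (inl v)) * npar' c * Sfx (inl c))).
  2:{ intros c Hc. unfold npar'. rewrite <- rsum_scal, <- rsum_scalr. apply rsum_ext; intros j Hj.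
      destruct (classic (par (inl c) = inr j)) as [Hp|Hp].
      - rewrite Hp. ring.
      - rewrite (chi_F (par (inl c) = inr j)) by auto. ring. }
  rewrite (rsum_ext I (fun k => chi (desc (inl k) (inl v)) * (mpar k * Sfx (inl k)))
            (fun k => chi ((inl k : vtx) = inl v) * (mpar k * Sfx (inl k)) + Ek v k * (mpar k * Sfx (inl k)))).
  2:{ intros k Hk. rewrite chi_desc_cust by auto. unfold Ek. rewrite Rmult_plus_distr_r. reflexivity. }
  rewrite rsum_plus. rewrite (rsum_single I (fun k => chi ((inl k : vtx) = inl v) * _) v Hv).
  2:{ intros k Hk Hne. rewrite chi_F. ring. congruence. }
  rewrite chi_T by auto.
  assert (rsum I (fun k => Ek v k * Acoef k * Sfx (inl k)) =
     rsum I (fun c => chi (desc (par (inl c)) (inl v)) * npar' c * Sfx (inl c)) - rsum I (fun k => Ek v k * (mpar k * Sfx (inl k)))).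
  { rewrite <- rsum_minus. apply rsum_ext. intros; unfold Ek, Acoef. ring. }
  rewrite H. ring. Qed.

End Drift.

End Drift.
Import Drift.

Module Weighted.
Open Scope R_scope.

Lemma amgm_eta (eta a b A : R) : eta > 0 -> 2 * a * A * b <= eta * a * a + A * A / eta * (b * b).
Proof. intros He. assert (0 <= (eta * a - A * b) * (eta * a - A * b)) by apply Rle_0_sqr.
  assert (eta * (2 * a * A * b) <= eta * (eta * a * a + A * A / eta * (b * b))).
  { replace (eta * (eta * a * a + A * A / eta * (b * b))) with (eta * eta * a * a + A * A * (b * b)) by (field; lra). nra. }
  apply Rmult_le_reg_l with eta; lra. Qed.

Lemma weighted_neg n (w m A y : nat -> R) (Em : nat -> nat -> R) (mm MA lam : R) :
  mm > 0 -> lam > 0 -> lam * mm * mm >= 4 * INR n * INR n * MA * MA ->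
  (forall v, (v < n)%nat -> 0 <= w v) ->
  (forall v, (v < n)%nat -> mm <= m v) ->
  (forall k, (k < n)%nat -> Rabs (A k) <= MA) ->
  (forall v k, (v < n)%nat -> (k < n)%nat -> 0 <= Em v k <= 1) ->
  (forall v k, (v < n)%nat -> (k < n)%nat -> Em v k <> 0 -> lam * w v <= w k) ->
  rsum n (fun v => 2 * w v * y v * (- m v * y v + rsum n (fun k => Em v k * A k * y k)))
   <= - mm * rsum n (fun v => w v * (y v * y v)).
Proof. intros Hmm Hlam Hcond Hw Hm HA HE Hord.
  destruct n. simpl. lra.
  assert (Hn : 0 < INR (S n)) by (apply lt_0_INR; lia).
  set (N := INR (S n)) in *.
  set (eta := mm / (2 * N)).
  assert (Heta : eta > 0) by (unfold eta; apply Rdiv_lt_0_compat; lra).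
  assert (MA >= 0). { specialize (HA 0%nat ltac:(lia)). pose proof (Rabs_pos (A 0%nat)). lra. }
  assert (Hpt : forall v k, (v < S n)%nat -> (k < S n)%nat ->
     2 * w v * y v * (Em v k * A k * y k) <= w v * eta * (y v * y v) + w k * (MA * MA / (eta * lam)) * (y k * y k)).
  { intros v k Hv Hk. specialize (HE v k Hv Hk). pose proof (Hw k Hk) as Hwk. specialize (Hw v Hv).
    pose proof (amgm_eta eta (y v) (y k) (Em v k * A k) Heta).
    assert (HAk : Rabs (Em v k * A k) <= MA).
    { rewrite Rabs_mult, Rabs_pos_eq by lra. specialize (HA k Hk). pose proof (Rabs_pos (A k)). nra. }
    assert ((Em v k * A k) * (Em v k * A k) <= MA * MA).
    { assert (Rabs (Em v k * A k) * Rabs (Em v k * A k) = (Em v k * A k) * (Em v k * A k)) by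
        (rewrite <- Rabs_mult; apply Rabs_pos_eq; apply Rle_0_sqr).
      pose proof (Rabs_pos (Em v k * A k)). nra. }
    destruct (Req_dec (Em v k) 0) as [e|ne].
    { rewrite e. assert (0 <= w v * eta * (y v * y v)) by (apply Rmult_le_pos; [nra|apply Rle_0_sqr]).
      assert (0 <= w k * (MA * MA / (eta * lam)) * (y k * y k)).
      { apply Rmult_le_pos; [|apply Rle_0_sqr]. apply Rmult_le_pos; auto. apply Rle_mult_inv_pos; nra. } nra. }
    specialize (Hord v k Hv Hk ne).
    assert (w v * (Em v k * A k * (Em v k * A k) / eta * (y k * y k)) <= w k * (MA * MA / (eta * lam)) * (y k * y k)).
    { assert (w v <= w k / lam) by (apply Rmult_le_reg_l with lam; [lra|]; field_simplify; lra).
      assert (0 <= y k * y k) by apply Rle_0_sqr.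
      assert (w v * (Em v k * A k * (Em v k * A k) / eta) <= (w k / lam) * (MA * MA / eta)).
      { apply Rmult_le_compat; auto. apply Rmult_le_pos; [apply Rle_0_sqr|left; apply Rinv_0_lt_compat; lra].
        unfold Rdiv. apply Rmult_le_compat_r; [left; apply Rinv_0_lt_compat; lra|]. auto. }
      replace (w k * (MA * MA / (eta * lam))) with (w k / lam * (MA * MA / eta)) by (field; lra).
      replace (w v * (Em v k * A k * (Em v k * A k) / eta * (y k * y k))) with
         (w v * (Em v k * A k * (Em v k * A k) / eta) * (y k * y k)) by ring.
      apply Rmult_le_compat_r; auto. }
    replace (2 * w v * y v * (Em v k * A k * y k)) with (w v * (2 * y v * (Em v k * A k) * y k)) by ring.
    assert (w v * (2 * y v * (Em v k * A k) * y k) <= w v * (eta * y v * y v + Em v k * A k * (Em v k * A k) / eta * (y k * y k))).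
    { apply Rmult_le_compat_l; auto. }
    nra. }
  assert (Hsum : rsum (S n) (fun v => 2 * w v * y v * (- m v * y v + rsum (S n) (fun k => Em v k * A k * y k)))
     = rsum (S n) (fun v => - 2 * m v * (w v * (y v * y v))) +
       rsum (S n) (fun v => rsum (S n) (fun k => 2 * w v * y v * (Em v k * A k * y k)))).
  { rewrite <- rsum_plus. apply rsum_ext. intros v Hv. rewrite rsum_scal. 
    rewrite Rmult_plus_distr_l. f_equal. ring. }
  rewrite Hsum.
  assert (H1 : rsum (S n) (fun v => rsum (S n) (fun k => 2 * w v * y v * (Em v k * A k * y k))) <=
     rsum (S n) (fun v => rsum (S n) (fun k => w v * eta * (y v * y v) + w k * (MA * MA / (eta * lam)) * (y k * y k)))).
  { apply rsum_le; intros v Hv; apply rsum_le; intros k Hk; apply Hpt; auto. }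
  assert (H2 : rsum (S n) (fun v => rsum (S n) (fun k => w v * eta * (y v * y v) + w k * (MA * MA / (eta * lam)) * (y k * y k)))
     = N * eta * rsum (S n) (fun v => w v * (y v * y v)) + N * (MA * MA / (eta * lam)) * rsum (S n) (fun v => w v * (y v * y v))).
  { rewrite (rsum_ext (S n) _ (fun v => N * (w v * eta * (y v * y v)) + rsum (S n) (fun k => w k * (MA * MA / (eta * lam)) * (y k * y k)))).
    2:{ intros v Hv. rewrite rsum_plus. rewrite rsum_const. auto. }
    rewrite rsum_plus, rsum_const, rsum_scal.
    rewrite (rsum_ext (S n) (fun k => w k * (MA * MA / (eta * lam)) * (y k * y k)) (fun k => (MA * MA / (eta * lam)) * (w k * (y k * y k)))) by (intros; ring).
    rewrite rsum_scal. rewrite (rsum_ext (S n) (fun v => w v * eta * (y v * y v)) (fun v => eta * (w v * (y v * y v)))) by (intros; ring).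
    rewrite rsum_scal. unfold N. ring. }
  assert (H3 : rsum (S n) (fun v => - 2 * m v * (w v * (y v * y v))) <= - 2 * mm * rsum (S n) (fun v => w v * (y v * y v))).
  { rewrite <- rsum_scal. apply rsum_le. intros v Hv. specialize (Hm v Hv). specialize (Hw v Hv).
    assert (0 <= w v * (y v * y v)) by (apply Rmult_le_pos; auto; apply Rle_0_sqr). nra. }
  set (T := rsum (S n) (fun v => w v * (y v * y v))) in *.
  assert (HT : 0 <= T) by (apply rsum_nonneg; intros; apply Rmult_le_pos; [apply Hw; auto|apply Rle_0_sqr]).
  assert (Ne : N * eta = mm / 2) by (unfold eta; field; lra).
  assert (Nb : N * (MA * MA / (eta * lam)) <= mm / 2).
  { unfold eta. replace (N * (MA * MA / (mm / (2 * N) * lam))) with (2 * N * N * MA * MA / (mm * lam)) by (field; lra).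
    apply Rmult_le_reg_r with (mm * lam). nra. unfold Rdiv. rewrite Rmult_assoc, Rinv_l by nra. nra. }
  assert (N * (MA * MA / (eta * lam)) * T <= mm / 2 * T) by (apply Rmult_le_compat_r; auto).
  nra. Qed.

End Weighted.
Import Weighted.

Module Lyap.
Open Scope R_scope.

Lemma Rabs_le_sum_abs n f : forall k, (k < n)%nat -> Rabs (f k) <= rsum n (fun k => Rabs (f k)).
Proof. intros k Hk. apply (rsum_term_le n (fun k => Rabs (f k))); auto. intros; apply Rabs_pos. Qed.

Lemma rsum_abs_bound n (f g : nat -> R) : (forall k, (k < n)%nat -> Rabs (f k) <= g k) -> Rabs (rsum n f) <= rsum n g.
Proof. intros H. eapply Rle_trans. apply rsum_abs. apply rsum_le; auto. Qed.

Lemma prod3_le (c a e S : R) : 0 <= c <= 1 -> 0 <= a -> 0 <= e <= S -> c * a * e <= a * S.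
Proof. intros Hc Ha He. assert (a * e <= a * S) by (apply Rmult_le_compat_l; lra).
  assert (0 <= a * e) by (apply Rmult_le_pos; lra).
  replace (c * a * e) with (c * (a * e)) by ring. nra. Qed.

Section Lyap.
Variables (I J : nat) (adj : nat -> nat -> bool) (gam ell : nat -> R) (mu : nat -> nat -> R).
Hypothesis HI : (1 <= I)%nat.
Hypothesis HJ : (1 <= J)%nat.
Hypothesis Htree : is_tree I J adj.
Hypothesis Hmu0 : forall i j, (i < I)%nat -> (j < J)%nat -> adj i j = false -> mu i j = 0.
Variable mm : R.
Hypothesis Hmm : mm > 0.
Hypothesis Hmpar : forall k, (k < I)%nat -> mm <= mpar I J adj mu k.

Let Hconn : gconnected I J adj := proj1 Htree.
Notation par := (par I J adj).
Notation desc := (desc I J adj).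
Notation depth := (depth I J adj).

Definition MA := rsum I (fun k => Rabs (Acoef I J adj mu k)).
Definition lam := 1 + 4 * INR I * INR I * MA * MA / (mm * mm).
Definition wt v := lam ^ depth (inl v).
Definition W := rsum I wt.

Lemma MA_nonneg : 0 <= MA.
Proof. apply rsum_nonneg; intros; apply Rabs_pos. Qed.
Lemma lam_ge1 : 1 <= lam.
Proof. unfold lam. assert (0 <= 4 * INR I * INR I * MA * MA / (mm * mm)).
  { apply Rle_mult_inv_pos; [|nra]. pose proof (pos_INR I). pose proof MA_nonneg. 
    repeat apply Rmult_le_pos; lra. } lra. Qed.
Lemma lam_cond : lam * mm * mm >= 4 * INR I * INR I * MA * MA.
Proof. unfold lam. assert (mm * mm > 0) by nra.
  replace ((1 + 4 * INR I * INR I * MA * MA / (mm * mm)) * mm * mm) with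
    (mm * mm + 4 * INR I * INR I * MA * MA) by (field; lra). lra. Qed.
Lemma wt_ge1 v : 1 <= wt v.
Proof. unfold wt. pose proof lam_ge1. induction (depth (inl v)); simpl; nra. Qed.
Lemma wt_le_W v : (v < I)%nat -> wt v <= W.
Proof. intros Hv. apply (rsum_term_le I wt); auto. intros; pose proof (wt_ge1 k); lra. Qed.
Lemma W_ge1 : 1 <= W.
Proof. pose proof (wt_le_W 0 ltac:(lia)). pose proof (wt_ge1 0). lra. Qed.

Lemma Ek_01 v k : 0 <= Ek I J adj v k <= 1.
Proof. apply chi_01. Qed.
Lemma Ek_order v k : (v < I)%nat -> (k < I)%nat -> Ek I J adj v k <> 0 -> lam * wt v <= wt k.
Proof. intros Hv Hk H. unfold Ek in H.
  destruct (classic (desc (par (inl k)) (inl v))) as [Hd|Hd]; [|rewrite chi_F in H; tauto].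
  assert (Hvk : valid I J (inl k)) by (apply valid_inl; auto).
  pose proof (par_spec I J adj HJ Hconn (inl k) Hvk ltac:(discriminate)) as [_ Hdp].
  pose proof (desc_depth I J adj HJ Hconn _ _ (par_valid I J adj HJ Hconn _ Hvk) Hd).
  unfold wt. replace (depth (inl k)) with (S (depth (inl v)) + (depth (inl k) - S (depth (inl v))))%nat by lia.
  rewrite pow_add. simpl. pose proof lam_ge1.
  assert (1 <= lam ^ (depth (inl k) - S (depth (inl v)))) by (apply pow_R1_Rle; lra).
  assert (0 <= lam ^ depth (inl v)) by (apply pow_le; lra).
  assert (0 <= lam * lam ^ depth (inl v)) by nra.
  set (r := lam ^ (depth (inl k) - S (depth (inl v)))) in *. 
  replace (lam * lam ^ depth (inl v) * r) with ((lam * lam ^ depth (inl v)) * r) by ring. nra. Qed.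

Definition cY v k := chi (desc (inl k) (inl v)).
Definition Yv (x : nat -> R) v := rsum I (fun k => cY v k * x k).
Definition qf (x : nat -> R) := rsum I (fun v => wt v * (Yv x v * Yv x v)).
Definition Dq i (x : nat -> R) := 2 * rsum I (fun v => wt v * cY v i * Yv x v).
Definition D2q i j := 2 * rsum I (fun v => wt v * cY v i * cY v j).

Lemma Yv_bound x v : Rabs (Yv x v) <= INR I * norm I x.
Proof. eapply Rle_trans; [|apply sum_abs_le_norm]. apply rsum_abs_bound. intros k Hk.
  rewrite Rabs_mult. pose proof (chi_01 (desc (inl k) (inl v))). unfold cY. 
  rewrite (Rabs_pos_eq (chi _)) by lra. pose proof (Rabs_pos (x k)). nra. Qed.

Lemma qf_nonneg x : 0 <= qf x.
Proof. apply rsum_nonneg. intros v Hv. pose proof (wt_ge1 v). apply Rmult_le_pos; [lra|apply Rle_0_sqr]. Qed.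

Lemma Yv_Sf x v : (v < I)%nat -> Yv x v = Sf I J adj x (fun _ => 0) (inl v).
Proof. intros Hv. unfold Sf, Lin, Yv, cY. rewrite (rsum_zero J). rewrite Rminus_0_r. reflexivity. intros; ring. Qed.

Lemma x_from_Y x k : (k < I)%nat ->
  x k = Yv x k - rsum J (fun j => chi (par (inr j) = inl k) * rsum I (fun c => chi (par (inl c) = inr j) * Yv x c)).
Proof. intros Hk. rewrite <- (Sf_cust I J adj HJ Htree x (fun _ => 0) k Hk).
  rewrite Yv_Sf by auto. f_equal. apply rsum_ext. intros j Hj. f_equal.
  pose proof (Sf_serv I J adj HJ Htree x (fun _ => 0) j Hj).
  rewrite (rsum_ext I _ (fun c => chi (par (inl c) = inr j) * Sf I J adj x (fun _ => 0) (inl c))). lra.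
  intros c Hc. rewrite Yv_Sf; auto. Qed.

Lemma sum_par_cust c : (c < I)%nat -> rsum J (fun j => chi (par (inl c) = inr j)) = 1.
Proof. intros Hc. destruct (par_inl I J adj HJ Htree c Hc) as [j0 [Hj0 [Hj0J _]]].
  rewrite (rsum_single J _ j0 Hj0J). apply chi_T; auto. intros j Hj Hne. apply chi_F. congruence. Qed.

Lemma x_bound x k : (k < I)%nat -> Rabs (x k) <= 2 * rsum I (fun c => Rabs (Yv x c)).
Proof. intros Hk. rewrite (x_from_Y x k Hk).
  eapply Rle_trans. apply Rabs_triang. rewrite Rabs_Ropp.
  assert (Rabs (Yv x k) <= rsum I (fun c => Rabs (Yv x c))) by (apply (Rabs_le_sum_abs I (Yv x)); auto).
  assert (Rabs (rsum J (fun j => chi (par (inr j) = inl k) * rsum I (fun c => chi (par (inl c) = inr j) * Yv x c)))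
     <= rsum I (fun c => Rabs (Yv x c))).
  { eapply Rle_trans. apply (rsum_abs_bound J _ (fun j => rsum I (fun c => chi (par (inl c) = inr j) * Rabs (Yv x c)))).
    - intros j Hj. rewrite Rabs_mult. pose proof (chi_01 (par (inr j) = inl k)). rewrite (Rabs_pos_eq (chi _)) by lra.
      assert (Rabs (rsum I (fun c => chi (par (inl c) = inr j) * Yv x c)) <= rsum I (fun c => chi (par (inl c) = inr j) * Rabs (Yv x c))).
      { apply rsum_abs_bound. intros c Hc. rewrite Rabs_mult. pose proof (chi_01 (par (inl c) = inr j)). rewrite (Rabs_pos_eq (chi _)) by lra. lra. }
      assert (0 <= rsum I (fun c => chi (par (inl c) = inr j) * Rabs (Yv x c))).
      { apply rsum_nonneg. intros c Hc. pose proof (chi_01 (par (inl c) = inr j)). pose proof (Rabs_pos (Yv x c)). nra. }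
      pose proof (Rabs_pos (rsum I (fun c => chi (par (inl c) = inr j) * Yv x c))). nra.
    - rewrite rsum_swap. apply rsum_le. intros c Hc. rewrite rsum_scalr, sum_par_cust by auto. lra. }
  lra. Qed.

Lemma N2_le_Y x : N2 I x <= 4 * INR I * INR I * rsum I (fun v => Yv x v * Yv x v).
Proof.
  set (S := rsum I (fun c => Rabs (Yv x c))).
  assert (HS : S * S <= INR I * rsum I (fun v => Yv x v * Yv x v)).
  { pose proof (rsum_CS I (fun c => Rabs (Yv x c))). unfold S. simpl in H.
    rewrite (rsum_ext I (fun k => Rabs (Yv x k) * (Rabs (Yv x k) * 1)) (fun v => Yv x v * Yv x v)) in H.
    nra. intros k _. rewrite Rmult_1_r, <- Rabs_mult. apply Rabs_pos_eq. apply Rle_0_sqr. }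
  assert (HS0 : 0 <= S) by (apply rsum_nonneg; intros; apply Rabs_pos).
  unfold N2. eapply Rle_trans. apply (rsum_le I _ (fun _ => 4 * (S * S))).
  - intros k Hk. pose proof (x_bound x k Hk). fold S in H. pose proof (Rabs_pos (x k)).
    assert (Rabs (x k) * Rabs (x k) = x k * x k) by (rewrite <- Rabs_mult; apply Rabs_pos_eq; apply Rle_0_sqr). nra.
  - rewrite rsum_const. pose proof (pos_INR I). nra. Qed.

Lemma Y2_le_N2 x : rsum I (fun v => Yv x v * Yv x v) <= INR I * (INR I * INR I * N2 I x).
Proof. rewrite <- rsum_const. apply rsum_le. intros v Hv. pose proof (Yv_bound x v).
  pose proof (norm_sq I x). pose proof (norm_nonneg I x). pose proof (pos_INR I).
  assert (Rabs (Yv x v) * Rabs (Yv x v) = Yv x v * Yv x v) by (rewrite <- Rabs_mult; apply Rabs_pos_eq; apply Rle_0_sqr).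
  pose proof (Rabs_pos (Yv x v)). 
  assert (Rabs (Yv x v) * Rabs (Yv x v) <= (INR I * norm I x) * (INR I * norm I x)) by (apply Rmult_le_compat; auto).
  nra. Qed.

Definition c0 := / (4 * INR I * INR I).
Definition C0 := W * (INR I * (INR I * INR I)).

Lemma INR_I_pos : 0 < INR I.
Proof. apply lt_0_INR; lia. Qed.

Lemma qf_lower x : c0 * N2 I x <= qf x.
Proof. unfold c0, qf. pose proof (N2_le_Y x). pose proof INR_I_pos.
  assert (rsum I (fun v => Yv x v * Yv x v) <= rsum I (fun v => wt v * (Yv x v * Yv x v))).
  { apply rsum_le. intros v Hv. pose proof (wt_ge1 v). pose proof (Rle_0_sqr (Yv x v)). unfold Rsqr in *. nra. }
  assert (4 * INR I * INR I * rsum I (fun v => Yv x v * Yv x v) <= 4 * INR I * INR I * rsum I (fun v => wt v * (Yv x v * Yv x v))).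
  { apply Rmult_le_compat_l; [nra|auto]. }
  apply Rmult_le_reg_l with (4 * INR I * INR I). nra. rewrite <- Rmult_assoc, Rinv_r by nra. lra. Qed.

Lemma qf_upper x : qf x <= C0 * N2 I x.
Proof. unfold C0, qf. pose proof (Y2_le_N2 x).
  assert (rsum I (fun v => wt v * (Yv x v * Yv x v)) <= W * rsum I (fun v => Yv x v * Yv x v)).
  { rewrite <- rsum_scal. apply rsum_le. intros v Hv. pose proof (wt_le_W v Hv). pose proof (Rle_0_sqr (Yv x v)). unfold Rsqr in *. nra. }
  pose proof W_ge1. nra. Qed.

Lemma Dq_sq i x : (i < I)%nat -> Dq i x * Dq i x <= 4 * INR I * W * qf x.
Proof. intros Hi. unfold Dq.
  pose proof (rsum_CS I (fun v => wt v * cY v i * Yv x v)). simpl in H.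
  assert (rsum I (fun k => wt k * cY k i * Yv x k * (wt k * cY k i * Yv x k * 1)) <= W * qf x).
  { unfold qf. rewrite <- rsum_scal. apply rsum_le. intros v Hv. pose proof (wt_le_W v Hv). pose proof (wt_ge1 v).
    pose proof (chi_01 (desc (inl i) (inl v))). fold (cY v i) in H2. pose proof (Rle_0_sqr (Yv x v)). unfold Rsqr in *.
    assert (cY v i * cY v i <= 1) by nra.
    replace (wt v * cY v i * Yv x v * (wt v * cY v i * Yv x v * 1)) with (wt v * (cY v i * cY v i) * (wt v * (Yv x v * Yv x v))) by ring.
    assert (0 <= wt v * (Yv x v * Yv x v)) by nra.
    assert (wt v * (cY v i * cY v i) <= W) by nra. nra. }
  pose proof INR_I_pos. nra. Qed.

Lemma D2q_bound i : 0 <= D2q i i <= 2 * W.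
Proof. unfold D2q, W. split.
  - apply Rmult_le_pos; [lra|]. apply rsum_nonneg. intros v Hv. pose proof (wt_ge1 v). pose proof (chi_01 (desc (inl i) (inl v))). unfold cY. nra.
  - apply Rmult_le_compat_l; [lra|]. apply rsum_le. intros v Hv. pose proof (wt_ge1 v). pose proof (chi_01 (desc (inl i) (inl v))). unfold cY.
    set (c := chi (desc (inl i) (inl v))) in *. assert (c * c <= 1) by nra.
    replace (wt v * c * c) with (wt v * (c * c)) by ring. 
    rewrite <- (Rmult_1_r (wt v)) at 2. apply Rmult_le_compat_l; lra. Qed.

Section Fixed.
Variables (x uc us : nat -> R).
Hypothesis HU : inU I J uc us.

Notation Sfx := (Sf I J adj (al I x uc) (be I x us)).
Notation s := (sx I x).

Lemma uc_le1 k : (k < I)%nat -> 0 <= uc k <= 1.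
Proof. intros Hk. destruct HU as [H1 [_ [H3 _]]]. split; auto. rewrite <- H3. apply (rsum_term_le I uc); auto. Qed.
Lemma us_le1 j : (j < J)%nat -> 0 <= us j <= 1.
Proof. intros Hj. destruct HU as [_ [H2 [_ H4]]]. split; auto. rewrite <- H4. apply (rsum_term_le J us); auto. Qed.

Lemma chi_sum_01 n (P : nat -> Prop) (f : nat -> R) : (forall k, (k < n)%nat -> 0 <= f k) -> rsum n f = 1 ->
  0 <= rsum n (fun k => chi (P k) * f k) <= 1.
Proof. intros H1 H2. split. apply rsum_nonneg. intros k Hk. pose proof (chi_01 (P k)). specialize (H1 k Hk). nra.
  rewrite <- H2. apply rsum_le. intros k Hk. pose proof (chi_01 (P k)). specialize (H1 k Hk). nra. Qed.

Lemma Sfx_Y k : Sfx (inl k) = Yv x k - ppart s * Yv uc k + npart s * rsum J (fun j => chi (desc (inr j) (inl k)) * us j).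
Proof. unfold Sf, Lin, Yv, cY, al, be. 
  rewrite (rsum_ext I _ (fun c => chi (desc (inl c) (inl k)) * x c - ppart s * (chi (desc (inl c) (inl k)) * uc c))) by (intros; ring).
  rewrite rsum_minus, rsum_scal.
  rewrite (rsum_ext J _ (fun j => - (npart s * (chi (desc (inr j) (inl k)) * us j)))) by (intros; ring).
  rewrite rsum_opp, rsum_scal. unfold sx. ring. Qed.

Lemma Sfx_err k : Rabs (Sfx (inl k) - Yv x k) <= Rabs s.
Proof. rewrite Sfx_Y. destruct HU as [H1 [H2 [H3 H4]]].
  pose proof (chi_sum_01 I (fun c => desc (inl c) (inl k)) uc H1 H3) as [A1 A2].
  pose proof (chi_sum_01 J (fun j => desc (inr j) (inl k)) us H2 H4) as [B1 B2].
  fold (Yv uc k) in A1, A2. unfold Yv, cY in A1, A2 |- *.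
  set (a := rsum I (fun k0 => chi (desc (inl k0) (inl k)) * uc k0)) in *.
  set (b := rsum J (fun j => chi (desc (inr j) (inl k)) * us j)) in *.
  pose proof (ppart_nonneg s). pose proof (npart_nonneg s). pose proof (ppart_npart_abs s).
  replace (rsum I (fun k0 => chi (desc (inl k0) (inl k)) * x k0) - ppart s * a + npart s * b - rsum I (fun k0 => chi (desc (inl k0) (inl k)) * x k0))
    with (- ppart s * a + npart s * b) by ring.
  apply Rabs_le. nra. Qed.

Definition Mp := rsum I (fun k => Rabs (mpar I J adj mu k)).
Definition Mn := rsum J (fun j => Rabs (npar I J adj mu j)).
Definition Mg := rsum I (fun k => Rabs (gam k)).
Definition Ml := rsum I (fun k => Rabs (ell k)).
Definition K1 := Mp + MA + Mn + Mg.
Definition K2 := Ml.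

Definition Rv v := Zv I J adj gam ell mu x uc us v - (- mpar I J adj mu v * Yv x v + rsum I (fun k => Ek I J adj v k * Acoef I J adj mu k * Yv x k)).

Lemma Rv_bound v : (v < I)%nat -> Rabs (Rv v) <= K1 * Rabs s + K2.
Proof. intros Hv. unfold Rv. rewrite (drift_dec I J adj gam ell mu HJ Htree Hmu0 x uc us HU v Hv).
  set (e := fun k => Sfx (inl k) - Yv x k).
  replace (- mpar I J adj mu v * Sfx (inl v) + rsum I (fun k => Ek I J adj v k * Acoef I J adj mu k * Sfx (inl k)) -
   rsum J (fun j => chi (desc (inr j) (inl v)) * npar I J adj mu j * be I x us j) +
   rsum I (fun k => chi (desc (inl k) (inl v)) * (- gam k * ppart (sx I x) * uc k + ell k)) -
   (- mpar I J adj mu v * Yv x v + rsum I (fun k => Ek I J adj v k * Acoef I J adj mu k * Yv x k)))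
  with (- mpar I J adj mu v * e v + rsum I (fun k => Ek I J adj v k * Acoef I J adj mu k * e k) -
   rsum J (fun j => chi (desc (inr j) (inl v)) * npar I J adj mu j * be I x us j) +
   rsum I (fun k => chi (desc (inl k) (inl v)) * (- gam k * ppart (sx I x) * uc k + ell k))).
  2:{ unfold e. assert (rsum I (fun k => Ek I J adj v k * Acoef I J adj mu k * (Sfx (inl k) - Yv x k)) =
        rsum I (fun k => Ek I J adj v k * Acoef I J adj mu k * Sfx (inl k)) - rsum I (fun k => Ek I J adj v k * Acoef I J adj mu k * Yv x k)).
      { rewrite <- rsum_minus. apply rsum_ext; intros; ring. } rewrite H. ring. }
  assert (Hs : 0 <= Rabs s) by apply Rabs_pos.
  assert (He : forall k, Rabs (e k) <= Rabs s) by (intros; apply Sfx_err).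
  assert (T1 : Rabs (- mpar I J adj mu v * e v) <= Mp * Rabs s).
  { rewrite Rabs_mult, Rabs_Ropp. apply Rmult_le_compat; auto using Rabs_pos. apply (Rabs_le_sum_abs I (mpar I J adj mu)); auto. }
  assert (T2 : Rabs (rsum I (fun k => Ek I J adj v k * Acoef I J adj mu k * e k)) <= MA * Rabs s).
  { unfold MA. rewrite <- rsum_scalr. apply rsum_abs_bound. intros k Hk. rewrite !Rabs_mult.
    pose proof (Ek_01 v k). rewrite (Rabs_pos_eq (Ek _ _ _ _ _)) by lra. pose proof (He k). pose proof (Rabs_pos (e k)).
    pose proof (Rabs_pos (Acoef I J adj mu k)).
    assert (Rabs (Acoef I J adj mu k) * Rabs (e k) <= Rabs (Acoef I J adj mu k) * Rabs s) by (apply Rmult_le_compat_l; auto).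
    assert (0 <= Rabs (Acoef I J adj mu k) * Rabs (e k)) by (apply Rmult_le_pos; auto).
    replace (Ek I J adj v k * Rabs (Acoef I J adj mu k) * Rabs (e k)) with (Ek I J adj v k * (Rabs (Acoef I J adj mu k) * Rabs (e k))) by ring.
    nra. }
  assert (T3 : Rabs (rsum J (fun j => chi (desc (inr j) (inl v)) * npar I J adj mu j * be I x us j)) <= Mn * Rabs s).
  { unfold Mn. rewrite <- rsum_scalr. apply rsum_abs_bound. intros j Hj. rewrite !Rabs_mult.
    pose proof (chi_01 (desc (inr j) (inl v))). rewrite (Rabs_pos_eq (chi _)) by lra.
    assert (Rabs (be I x us j) <= Rabs s).
    { unfold be. rewrite Rabs_Ropp, Rabs_mult. pose proof (us_le1 j Hj). rewrite (Rabs_pos_eq (us j)) by lra.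
      rewrite (Rabs_pos_eq (npart _)) by apply npart_nonneg. pose proof (ppart_npart_abs s). pose proof (ppart_nonneg s).
      pose proof (npart_nonneg s). unfold sx in *. nra. }
    pose proof (Rabs_pos (npar I J adj mu j)). pose proof (Rabs_pos (be I x us j)). apply prod3_le; auto. }
  assert (T4 : Rabs (rsum I (fun k => chi (desc (inl k) (inl v)) * (- gam k * ppart (sx I x) * uc k + ell k))) <= Mg * Rabs s + Ml).
  { unfold Mg, Ml. rewrite <- rsum_scalr, <- rsum_plus. apply rsum_abs_bound. intros k Hk. rewrite Rabs_mult.
    pose proof (chi_01 (desc (inl k) (inl v))). rewrite (Rabs_pos_eq (chi _)) by lra.
    assert (Rabs (- gam k * ppart (sx I x) * uc k + ell k) <= Rabs (gam k) * Rabs s + Rabs (ell k)).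
    { eapply Rle_trans. apply Rabs_triang. rewrite !Rabs_mult, Rabs_Ropp.
      pose proof (uc_le1 k Hk). rewrite (Rabs_pos_eq (uc k)) by lra. rewrite (Rabs_pos_eq (ppart _)) by apply ppart_nonneg.
      pose proof (ppart_npart_abs s). pose proof (ppart_nonneg s). pose proof (npart_nonneg s). unfold sx in *.
      pose proof (Rabs_pos (gam k)). assert (ppart (edot I x) * uc k <= Rabs (edot I x)) by nra. nra. }
    pose proof (Rabs_pos (- gam k * ppart (sx I x) * uc k + ell k)). pose proof (Rabs_pos (gam k)). pose proof (Rabs_pos (ell k)). nra. }
  unfold K1, K2.
  eapply Rle_trans. apply Rabs_triang. eapply Rle_trans. apply Rplus_le_compat_r. 
  unfold Rminus. eapply Rle_trans. apply Rabs_triang. rewrite Rabs_Ropp. apply Rplus_le_compat_r. apply Rabs_triang.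
  lra. Qed.

Definition Gdrift := rsum I (fun i => drift I J adj gam ell mu x uc us i * Dq i x).

Lemma Gdrift_eq : Gdrift = rsum I (fun v => 2 * wt v * Yv x v * Zv I J adj gam ell mu x uc us v).
Proof. unfold Gdrift, Dq, Zv.
  rewrite (rsum_ext I _ (fun i => rsum I (fun v => 2 * wt v * Yv x v * (cY v i * drift I J adj gam ell mu x uc us i)))).
  2:{ intros i Hi. rewrite <- rsum_scal, <- rsum_scal. apply rsum_ext; intros; ring. }
  rewrite rsum_swap. apply rsum_ext. intros v Hv. rewrite rsum_scal. unfold cY. auto. Qed.

Definition c1 := mm * c0.
Definition C12 := 2 * W * INR I * INR I.

Lemma Gdrift_bound : Gdrift <= - c1 * N2 I x + C12 * (K1 * Rabs s + K2) * norm I x.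
Proof. rewrite Gdrift_eq.
  rewrite (rsum_ext I _ (fun v => 2 * wt v * Yv x v * (- mpar I J adj mu v * Yv x v + rsum I (fun k => Ek I J adj v k * Acoef I J adj mu k * Yv x k))
     + 2 * wt v * Yv x v * Rv v)) by (intros; unfold Rv; ring).
  rewrite rsum_plus.
  pose proof (weighted_neg I wt (mpar I J adj mu) (Acoef I J adj mu) (Yv x) (Ek I J adj) mm MA lam Hmm
    ltac:(pose proof lam_ge1; lra) lam_cond ltac:(intros; pose proof (wt_ge1 v); lra) Hmpar
    ltac:(intros; apply (Rabs_le_sum_abs I (Acoef I J adj mu)); auto) ltac:(intros; apply Ek_01) Ek_order) as H1.
  assert (H2 : rsum I (fun v => wt v * (Yv x v * Yv x v)) >= c0 * N2 I x) by (pose proof (qf_lower x); unfold qf in H; lra).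
  assert (H3 : rsum I (fun v => 2 * wt v * Yv x v * Rv v) <= C12 * (K1 * Rabs s + K2) * norm I x).
  { unfold C12. assert (HK : 0 <= K1 * Rabs s + K2).
    { pose proof (Rv_bound 0 ltac:(lia)). pose proof (Rabs_pos (Rv 0)). lra. }
    eapply Rle_trans. apply (rsum_le I _ (fun v => 2 * W * (INR I * norm I x) * (K1 * Rabs s + K2))).
    - intros v Hv. pose proof (Rv_bound v Hv). pose proof (Yv_bound x v). pose proof (wt_le_W v Hv). pose proof (wt_ge1 v).
      assert (2 * wt v * Yv x v * Rv v <= 2 * wt v * Rabs (Yv x v) * Rabs (Rv v)).
      { rewrite !Rmult_assoc. apply Rmult_le_compat_l. lra. apply Rmult_le_compat_l. lra.
        rewrite <- Rabs_mult. apply RRle_abs. }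
      pose proof (Rabs_pos (Yv x v)). pose proof (Rabs_pos (Rv v)).
      assert (Rabs (Yv x v) * Rabs (Rv v) <= (INR I * norm I x) * (K1 * Rabs s + K2)) by (apply Rmult_le_compat; auto).
      assert (wt v * (Rabs (Yv x v) * Rabs (Rv v)) <= W * ((INR I * norm I x) * (K1 * Rabs s + K2))).
      { apply Rmult_le_compat; try lra. apply Rmult_le_pos; auto. }
      replace (2 * wt v * Rabs (Yv x v) * Rabs (Rv v)) with (2 * (wt v * (Rabs (Yv x v) * Rabs (Rv v)))) in H6 by ring.
      lra.
    - rewrite rsum_const. right. ring. }
  unfold c1. nra. Qed.

End Fixed.
End Lyap.

End Lyap.
Import Lyap.

Module Calc.
Open Scope R_scope.

Section Cont.
Variable d : nat.
Notation cont := (continuous_on_Rd d).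

Lemma cont_const c : cont (fun _ => c).
Proof. intros x Hx eps He. exists 1. split. lra. intros. rewrite Rminus_diag, Rabs_R0. lra. Qed.

Lemma cont_coord k : cont (fun x => x k).
Proof. intros x Hx eps He. exists eps. split; auto. intros y Hy Hn.
  destruct (lt_dec k d).
  - pose proof (coord_le_norm d (vsub y x) k l). change (vsub y x k) with (y k - x k) in H. lra.
  - rewrite (Hx k), (Hy k) by lia. rewrite Rminus_diag, Rabs_R0. lra. Qed.

Lemma cont_plus f g : cont f -> cont g -> cont (fun x => f x + g x).
Proof. intros Hf Hg x Hx eps He.
  destruct (Hf x Hx (eps/2)) as [a [Ha Hfa]]; [lra|]. destruct (Hg x Hx (eps/2)) as [b [Hb Hgb]]; [lra|].
  exists (Rmin a b). split. apply Rmin_pos; auto. intros y Hy Hn.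
  specialize (Hfa y Hy ltac:(pose proof (Rmin_l a b); lra)). specialize (Hgb y Hy ltac:(pose proof (Rmin_r a b); lra)).
  replace (f y + g y - (f x + g x)) with ((f y - f x) + (g y - g x)) by ring.
  eapply Rle_lt_trans. apply Rabs_triang. lra. Qed.

Lemma cont_mult f g : cont f -> cont g -> cont (fun x => f x * g x).
Proof. intros Hf Hg x Hx eps He.
  set (A := Rabs (f x) + 1). set (B := Rabs (g x) + 1).
  assert (HA : A > 0) by (unfold A; pose proof (Rabs_pos (f x)); lra).
  assert (HB : B > 0) by (unfold B; pose proof (Rabs_pos (g x)); lra).
  set (e1 := Rmin 1 (eps / (2 * B))). set (e2 := eps / (2 * (A + 1))).
  assert (He1 : e1 > 0) by (apply Rmin_pos; [lra|apply Rdiv_lt_0_compat; lra]).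
  assert (He2 : e2 > 0) by (apply Rdiv_lt_0_compat; lra).
  destruct (Hf x Hx e1 He1) as [a [Ha Hfa]]. destruct (Hg x Hx e2 He2) as [b [Hb Hgb]].
  exists (Rmin a b). split. apply Rmin_pos; auto. intros y Hy Hn.
  specialize (Hfa y Hy ltac:(pose proof (Rmin_l a b); lra)). specialize (Hgb y Hy ltac:(pose proof (Rmin_r a b); lra)).
  replace (f y * g y - f x * g x) with (f y * (g y - g x) + (f y - f x) * g x) by ring.
  eapply Rle_lt_trans. apply Rabs_triang. rewrite !Rabs_mult.
  assert (Rabs (f y) <= A + 1).
  { unfold A. replace (f y) with (f x + (f y - f x)) by ring. eapply Rle_trans. apply Rabs_triang.
    pose proof (Rmin_l 1 (eps / (2 * B))). fold e1 in H. lra. }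
  assert (Rabs (f y) * Rabs (g y - g x) <= (A + 1) * e2).
  { apply Rmult_le_compat; auto using Rabs_pos. lra. }
  assert (Rabs (f y - f x) * Rabs (g x) <= (eps / (2 * B)) * B).
  { apply Rmult_le_compat; auto using Rabs_pos. pose proof (Rmin_r 1 (eps / (2 * B))). fold e1 in H1. lra.
    unfold B; lra. }
  assert ((A + 1) * e2 = eps / 2) by (unfold e2; field; lra).
  assert (eps / (2 * B) * B = eps / 2) by (field; lra).
  assert (Rabs (f y) * Rabs (g y - g x) <= (A + 1) * Rabs (g y - g x)) by (apply Rmult_le_compat_r; auto using Rabs_pos).
  assert ((A + 1) * Rabs (g y - g x) < (A + 1) * e2) by (apply Rmult_lt_compat_l; lra).
  lra. Qed.

Lemma cont_scal c f : cont f -> cont (fun x => c * f x).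
Proof. intros. apply cont_mult; auto. apply cont_const. Qed.

Lemma cont_rsum n (F : nat -> (nat -> R) -> R) : (forall t, (t < n)%nat -> cont (F t)) ->
  cont (fun x => rsum n (fun t => F t x)).
Proof. induction n; intros H; simpl. apply cont_const. apply cont_plus. apply IHn; intros; apply H; lia. apply H; lia. Qed.

Lemma cont_comp (phi : R -> R) f : cont f -> (forall x, inRd d x -> continuity_pt phi (f x)) -> cont (fun x => phi (f x)).
Proof. intros Hf Hphi x Hx eps He.
  destruct (Hphi x Hx eps He) as [a [Ha Hpa]].
  destruct (Hf x Hx a Ha) as [b [Hb Hfb]]. exists b. split; auto. intros y Hy Hn.
  specialize (Hfb y Hy Hn). destruct (Req_dec (f y) (f x)) as [e|ne].
  - rewrite e, Rminus_diag, Rabs_R0. lra.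
  - apply (Hpa (f y)). split. split. constructor. auto. simpl. unfold R_dist. auto. Qed.

End Cont.

Lemma dpl_ext f g x l : (forall t, f t = g t) -> derivable_pt_lim f x l -> derivable_pt_lim g x l.
Proof. intros H. replace g with f; auto. apply functional_extensionality; auto. Qed.

Lemma dpl_rsum n (F : nat -> R -> R) (l : nat -> R) x : (forall v, (v < n)%nat -> derivable_pt_lim (F v) x (l v)) ->
  derivable_pt_lim (fun t => rsum n (fun v => F v t)) x (rsum n l).
Proof. induction n; intros H; simpl.
  - apply (dpl_ext (fct_cte 0)). intros; reflexivity. apply derivable_pt_lim_const.
  - apply (dpl_ext (plus_fct (fun t => rsum n (fun v => F v t)) (F n))). intros; reflexivity.
    apply derivable_pt_lim_plus. apply IHn; intros; apply H; lia. apply H; lia. Qed.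

Lemma dpl_affine a b x : derivable_pt_lim (fun t => a + b * t) x b.
Proof. apply (dpl_ext (plus_fct (fct_cte a) (mult_real_fct b id))). intros; reflexivity.
  replace b with (0 + b * 1) at 2 by ring. apply derivable_pt_lim_plus. apply derivable_pt_lim_const.
  apply derivable_pt_lim_scal, derivable_pt_lim_id. Qed.

Lemma dpl_wsq w a b : derivable_pt_lim (fun t => w * ((a + b * t) * (a + b * t))) 0 (w * (2 * a * b)).
Proof. apply (dpl_ext (mult_real_fct w (mult_fct (fun t => a + b * t) (fun t => a + b * t)))). intros; reflexivity.
  apply derivable_pt_lim_scal.
  pose proof (derivable_pt_lim_mult (fun t => a+b*t) (fun t => a+b*t) 0 b b (dpl_affine a b 0) (dpl_affine a b 0)) as H.
  cbv beta in H. replace (b * (a + b * 0) + (a + b * 0) * b) with (2 * a * b) in H by ring. exact H. Qed.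

Lemma dpl_Rpower_comp (g : R -> R) p x l : 0 < g x -> derivable_pt_lim g x l ->
  derivable_pt_lim (fun t => Rpower (g t) p) x (p * Rpower (g x) (p - 1) * l).
Proof. intros Hg Hd. apply (dpl_ext (comp (fun y => Rpower y p) g)). intros; reflexivity.
  apply derivable_pt_lim_comp; auto. apply derivable_pt_lim_power; auto. Qed.

Lemma cont_Rpower1 a y : 0 <= y -> continuity_pt (fun z => Rpower (1 + z) a) y.
Proof. intros Hy. apply derivable_continuous_pt. exists (a * Rpower (1 + y) (a - 1) * 1).
  apply (dpl_Rpower_comp (fun z => 1 + z) a y 1). lra.
  apply (dpl_ext (fun z => 1 + 1 * z)). intros; ring. apply dpl_affine. Qed.

Lemma rsum_shift d (f : nat -> R) x i t : (i < d)%nat ->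
  rsum d (fun k => f k * shift x i t k) = rsum d (fun k => f k * x k) + f i * t.
Proof. intros Hi. unfold shift.
  rewrite (rsum_ext d _ (fun k => f k * x k + (if Nat.eqb k i then f k * t else 0))).
  2:{ intros k Hk. destruct (Nat.eqb k i); ring. }
  rewrite rsum_plus. f_equal. rewrite (rsum_single d _ i Hi). rewrite Nat.eqb_refl; auto.
  intros k Hk Hne. apply Nat.eqb_neq in Hne. rewrite Hne. auto. Qed.

Lemma shift_inRd d x i t : (i < d)%nat -> inRd d x -> inRd d (shift x i t).
Proof. intros Hi Hx k Hk. unfold shift. destruct (Nat.eqb_spec k i). lia. auto. Qed.

Section Vfun.
Variables (d n : nat) (c : nat -> nat -> R) (w : nat -> R) (p kap : R).
Hypothesis Hw : forall v, (v < n)%nat -> 0 <= w v.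

Definition Yg x v := rsum d (fun k => c v k * x k).
Definition Qg x := rsum n (fun v => w v * (Yg x v * Yg x v)).
Definition DQg i x := 2 * rsum n (fun v => w v * c v i * Yg x v).
Definition D2Qg i j := 2 * rsum n (fun v => w v * c v i * c v j).
Definition Vg x := kap * Rpower (1 + Qg x) p.
Definition DVg i x := kap * p * Rpower (1 + Qg x) (p - 1) * DQg i x.
Definition D2Vg i j x := kap * p * (p - 1) * Rpower (1 + Qg x) (p - 2) * DQg j x * DQg i x
                        + kap * p * Rpower (1 + Qg x) (p - 1) * D2Qg i j.

Lemma Qg_nonneg x : 0 <= Qg x.
Proof. apply rsum_nonneg. intros v Hv. apply Rmult_le_pos; auto. apply Rle_0_sqr. Qed.

Lemma Yg_shift x v i t : (i < d)%nat -> Yg (shift x i t) v = Yg x v + c v i * t.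
Proof. intros Hi. unfold Yg. apply rsum_shift; auto. Qed.

Lemma DQg_shift x i j t : (j < d)%nat -> DQg i (shift x j t) = DQg i x + D2Qg i j * t.
Proof. intros Hj. unfold DQg, D2Qg.
  rewrite (rsum_ext n _ (fun v => w v * c v i * Yg x v + w v * c v i * c v j * t)).
  rewrite rsum_plus, rsum_scalr. ring. intros v Hv. rewrite Yg_shift by auto. ring. Qed.

Lemma Qg_deriv x i : (i < d)%nat -> derivable_pt_lim (fun t => Qg (shift x i t)) 0 (DQg i x).
Proof. intros Hi. unfold Qg.
  apply (dpl_ext (fun t => rsum n (fun v => w v * ((Yg x v + c v i * t) * (Yg x v + c v i * t))))).
  { intros t. apply rsum_ext. intros v Hv. rewrite Yg_shift; auto. }
  replace (DQg i x) with (rsum n (fun v => w v * (2 * Yg x v * c v i))).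
  apply dpl_rsum. intros v Hv. apply dpl_wsq.
  unfold DQg. rewrite <- rsum_scal. apply rsum_ext; intros; ring. Qed.

Lemma Vg_partial x i : (i < d)%nat -> has_partial Vg i x (DVg i x).
Proof. intros Hi. unfold has_partial, Vg, DVg.
  assert (Hx0 : shift x i 0 = x). { apply functional_extensionality. intros k. unfold shift. destruct (Nat.eqb k i); ring. }
  apply (dpl_ext (mult_real_fct kap (fun t => Rpower (1 + Qg (shift x i t)) p))). intros; reflexivity.
  replace (kap * p * Rpower (1 + Qg x) (p - 1) * DQg i x) with (kap * (p * Rpower (1 + Qg (shift x i 0)) (p - 1) * DQg i x))
    by (rewrite Hx0; ring).
  apply derivable_pt_lim_scal. apply (dpl_Rpower_comp (fun t => 1 + Qg (shift x i t))).
  pose proof (Qg_nonneg (shift x i 0)). lra.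
  apply (dpl_ext (plus_fct (fct_cte 1) (fun t => Qg (shift x i t)))). intros; reflexivity.
  replace (DQg i x) with (0 + DQg i x) by ring. apply derivable_pt_lim_plus. apply derivable_pt_lim_const.
  apply Qg_deriv; auto. Qed.

Lemma dpl_eq f x l l' : derivable_pt_lim f x l -> l = l' -> derivable_pt_lim f x l'.
Proof. intros H e; subst; auto. Qed.

Lemma DVg_partial x i j : (j < d)%nat -> has_partial (DVg i) j x (D2Vg i j x).
Proof. intros Hj. unfold has_partial, DVg, D2Vg.
  assert (Hx0 : shift x j 0 = x). { apply functional_extensionality. intros k. unfold shift. destruct (Nat.eqb k j); ring. }
  apply (dpl_ext (mult_fct (mult_real_fct (kap * p) (fun t => Rpower (1 + Qg (shift x j t)) (p - 1))) (fun t => DQg i x + D2Qg i j * t))).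
  { intros t. unfold mult_real_fct, mult_fct. rewrite DQg_shift by auto. ring. }
  set (F1 := mult_real_fct (kap * p) (fun t => Rpower (1 + Qg (shift x j t)) (p - 1))).
  assert (H1 : derivable_pt_lim F1 0 (kap * p * ((p - 1) * Rpower (1 + Qg (shift x j 0)) (p - 1 - 1) * DQg j x))).
  { apply derivable_pt_lim_scal. apply (dpl_Rpower_comp (fun t => 1 + Qg (shift x j t))).
    pose proof (Qg_nonneg (shift x j 0)). lra.
    apply (dpl_ext (plus_fct (fct_cte 1) (fun t => Qg (shift x j t)))). intros; reflexivity.
    replace (DQg j x) with (0 + DQg j x) by ring. apply derivable_pt_lim_plus. apply derivable_pt_lim_const.
    apply Qg_deriv; auto. }
  pose proof (derivable_pt_lim_mult F1 (fun t => DQg i x + D2Qg i j * t) 0 _ _ H1 (dpl_affine (DQg i x) (D2Qg i j) 0)) as H2.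
  eapply dpl_eq. exact H2. unfold F1, mult_real_fct. cbv beta. rewrite Hx0.
  replace (p - 1 - 1) with (p - 2) by ring. ring. Qed.

Lemma Yg_cont v : continuous_on_Rd d (fun x => Yg x v).
Proof. unfold Yg. apply (cont_rsum d d (fun k x => c v k * x k)). intros. apply cont_scal, cont_coord. Qed.
Lemma Qg_cont : continuous_on_Rd d Qg.
Proof. unfold Qg. apply (cont_rsum d n (fun v x => w v * (Yg x v * Yg x v))). intros. apply cont_scal, cont_mult; apply Yg_cont. Qed.
Lemma DQg_cont i : continuous_on_Rd d (DQg i).
Proof. unfold DQg. apply cont_scal. apply (cont_rsum d n (fun v x => w v * c v i * Yg x v)). intros. apply cont_scal, Yg_cont. Qed.
Lemma Rp_cont a : continuous_on_Rd d (fun x => Rpower (1 + Qg x) a).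
Proof. apply (cont_comp d (fun z => Rpower (1 + z) a) Qg). apply Qg_cont. intros. apply cont_Rpower1, Qg_nonneg. Qed.

Lemma Vg_C2 : C2_with d Vg DVg D2Vg.
Proof. split; [|split; [|split; [|split]]].
  - unfold Vg. apply cont_scal, Rp_cont.
  - intros i Hi. unfold DVg. apply cont_mult. apply cont_scal. apply Rp_cont. apply DQg_cont.
  - intros i j Hi Hj. unfold D2Vg. apply cont_plus.
    + apply cont_mult; [|apply DQg_cont]. apply cont_mult; [|apply DQg_cont]. apply cont_scal, Rp_cont.
    + apply cont_mult; [|apply cont_const]. apply cont_scal, Rp_cont.
  - intros x i Hx Hi. apply Vg_partial; auto.
  - intros x i j Hx Hi Hj. apply DVg_partial; auto. Qed.

End Vfun.

End Calc.
Import Calc.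

Module Cost.
Open Scope R_scope.

Lemma Rpower_pos a b : 0 < Rpower a b.
Proof. unfold Rpower. apply exp_pos. Qed.

Section Rp.
Variable m : R.
Hypothesis Hm : m >= 1.

Lemma rpow_le0 a : a <= 0 -> rpow a m = 0.
Proof. intros H. unfold rpow. destruct (Rle_dec a 0); [auto|lra]. Qed.
Lemma rpow_posE a : 0 < a -> rpow a m = Rpower a m.
Proof. intros H. unfold rpow. destruct (Rle_dec a 0); [lra|auto]. Qed.
Lemma rpow_nonneg a : 0 <= rpow a m.
Proof. unfold rpow. destruct (Rle_dec a 0). lra. left; apply Rpower_pos. Qed.
Lemma rpow_pos a : 0 < a -> 0 < rpow a m.
Proof. intros H. rewrite rpow_posE by auto. apply Rpower_pos. Qed.
Lemma rpow_mono a b : 0 <= a <= b -> rpow a m <= rpow b m.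
Proof. intros [H1 H2]. destruct (Req_dec a 0). subst. rewrite rpow_le0 by lra. apply rpow_nonneg.
  rewrite !rpow_posE by lra. apply Rle_Rpower_l; lra. Qed.
Lemma Rpower_le_self a : 0 < a <= 1 -> Rpower a m <= a.
Proof. intros H. unfold Rpower. rewrite <- (exp_ln a) at 2 by lra.
  assert (ln a <= 0). { destruct (Req_dec a 1). subst; rewrite ln_1; lra. left. rewrite <- ln_1. apply ln_increasing; lra. }
  destruct (Req_dec (m * ln a) (ln a)). rewrite H1; lra. left. apply exp_increasing. nra. Qed.
Lemma rpow_le_self a : 0 <= a <= 1 -> rpow a m <= a.
Proof. intros H. destruct (Req_dec a 0). subst. rewrite rpow_le0; lra. rewrite rpow_posE by lra. apply Rpower_le_self; lra. Qed.
Lemma Rpower_ge_self a : 1 <= a -> a <= Rpower a m.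
Proof. intros H. rewrite <- (Rpower_1 a) at 1 by lra. apply Rle_Rpower; lra. Qed.
Lemma rpow_ge_self a : 1 <= a -> a <= rpow a m.
Proof. intros H. rewrite rpow_posE by lra. apply Rpower_ge_self; auto. Qed.
Lemma rpow_1 a : 0 <= a -> rpow a 1 = a.
Proof. intros H. unfold rpow. destruct (Rle_dec a 0). lra. apply Rpower_1; lra. Qed.

Lemma Rpower_cont a y : 0 < y -> continuity_pt (fun z => Rpower z a) y.
Proof. intros Hy. apply derivable_continuous_pt. exists (a * Rpower y (a - 1)). apply derivable_pt_lim_power; auto. Qed.

Lemma rpow_cont y : continuity_pt (fun z => rpow z m) y.
Proof. intros eps He.
  destruct (Rlt_le_dec 0 y) as [Hy|Hy].
  - destruct (Rpower_cont m y Hy eps He) as [a [Ha Hpa]].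
    exists (Rmin a (y / 2)). split. apply Rmin_pos; lra. intros z [[_ Hz1] Hz2]. simpl in *. unfold R_dist in *.
    pose proof (Rmin_l a (y/2)). pose proof (Rmin_r a (y/2)).
    assert (0 < z) by (apply Rabs_def2 in Hz2; lra).
    rewrite !rpow_posE by lra. apply (Hpa z). split. split. constructor. auto. simpl. unfold R_dist. lra.
  - exists (Rmin 1 eps). split. apply Rmin_pos; lra. intros z [[_ Hz1] Hz2]. simpl in *. unfold R_dist in *.
    pose proof (Rmin_l 1 eps). pose proof (Rmin_r 1 eps). apply Rabs_def2 in Hz2.
    destruct (Rle_dec y 0); [|lra]. rewrite (rpow_le0 y) by lra. rewrite Rminus_0_r.
    destruct (Rle_dec z 0). rewrite rpow_le0 by lra. rewrite Rabs_R0. lra.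
    rewrite Rabs_pos_eq by apply rpow_nonneg. assert (rpow z m <= z) by (apply rpow_le_self; lra). lra. Qed.

Lemma Rpower_mul_self v : 0 < v -> Rpower v (m - 1) * v = Rpower v m.
Proof. intros Hv. rewrite <- (Rpower_1 v) at 2 by auto. rewrite <- Rpower_plus. f_equal. ring. Qed.

Lemma tangent u v : 0 <= u -> 0 < v -> Rpower v m + m * Rpower v (m - 1) * (u - v) <= rpow u m.
Proof. intros Hu Hv.
  destruct (Req_dec u 0) as [e|ne].
  { subst. rewrite rpow_le0 by lra. replace (m * Rpower v (m - 1) * (0 - v)) with (- m * (Rpower v (m - 1) * v)) by ring.
    rewrite Rpower_mul_self by auto. pose proof (Rpower_pos v m). nra. }
  rewrite rpow_posE by lra.
  assert (Hd : forall c, 0 < c -> derivable_pt_lim (fun z => Rpower z m) c (m * Rpower c (m - 1))) by (intros; apply derivable_pt_lim_power; auto).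
  destruct (Rtotal_order u v) as [Hlt|[Heq|Hgt]].
  - destruct (MVT_cor2 (fun z => Rpower z m) (fun z => m * Rpower z (m - 1)) u v Hlt) as [c [Hc1 Hc2]].
    { intros c Hc. apply Hd. lra. }
    assert (Rpower c (m - 1) <= Rpower v (m - 1)) by (apply Rle_Rpower_l; lra).
    assert (m * Rpower c (m - 1) * (v - u) <= m * Rpower v (m - 1) * (v - u)).
    { apply Rmult_le_compat_r. lra. apply Rmult_le_compat_l; lra. }
    lra.
  - subst. lra.
  - destruct (MVT_cor2 (fun z => Rpower z m) (fun z => m * Rpower z (m - 1)) v u Hgt) as [c [Hc1 Hc2]].
    { intros c Hc. apply Hd. lra. }
    assert (Rpower v (m - 1) <= Rpower c (m - 1)) by (apply Rle_Rpower_l; lra).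
    assert (m * Rpower v (m - 1) * (u - v) <= m * Rpower c (m - 1) * (u - v)).
    { apply Rmult_le_compat_r. lra. apply Rmult_le_compat_l; lra. }
    lra. Qed.

Definition simplex (n : nat) (u : nat -> R) := (forall i, (i < n)%nat -> 0 <= u i) /\ rsum n u = 1.
Definition Fw (n : nat) (xi u : nat -> R) := rsum n (fun i => xi i * rpow (u i) m).

Lemma argmin_ex n (f : nat -> R) : (1 <= n)%nat -> exists i0, (i0 < n)%nat /\ forall i, (i < n)%nat -> f i0 <= f i.
Proof. induction n; intros H. lia. destruct n. exists 0%nat. split. lia. intros i Hi. assert (i = 0%nat) by lia. subst; lra.
  destruct (IHn ltac:(lia)) as [i0 [Hi0 Hmin]]. destruct (Rle_dec (f i0) (f (S n))).
  - exists i0. split. lia. intros i Hi. destruct (Nat.eq_dec i (S n)). subst; auto. apply Hmin; lia.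
  - exists (S n). split. lia. intros i Hi. destruct (Nat.eq_dec i (S n)). subst; lra. specialize (Hmin i ltac:(lia)). lra. Qed.

Lemma simplex_pos_elem n u : simplex n u -> exists i, (i < n)%nat /\ 0 < u i.
Proof. intros [H1 H2]. destruct (Classical_Prop.classic (exists i, (i < n)%nat /\ 0 < u i)) as [H|H]; auto.
  exfalso. assert (rsum n u <= 0). { rewrite <- (rsum_0 n). apply rsum_le. intros k Hk.
    destruct (Rle_dec (u k) 0); auto. exfalso; apply H. exists k; split; auto; lra. } lra. Qed.

Lemma Fw_pos n xi u : (forall i, (i < n)%nat -> xi i > 0) -> simplex n u -> 0 < Fw n xi u.
Proof. intros Hxi Hu. destruct (simplex_pos_elem n u Hu) as [i [Hi Hui]].
  unfold Fw. eapply Rlt_le_trans; [|apply (rsum_term_le n (fun i => xi i * rpow (u i) m) i Hi)].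
  - apply Rmult_lt_0_compat. apply Hxi; auto. apply rpow_pos; auto.
  - intros k Hk. apply Rmult_le_pos. specialize (Hxi k Hk). lra. apply rpow_nonneg. Qed.

Lemma minimizer n xi : (1 <= n)%nat -> (forall i, (i < n)%nat -> xi i > 0) ->
  exists us, simplex n us /\ forall u, simplex n u -> Fw n xi us <= Fw n xi u.
Proof. intros Hn Hxi.
  destruct (Req_dec m 1) as [Hm1|Hm1].
  - destruct (argmin_ex n xi Hn) as [i0 [Hi0 Hmin]].
    exists (fun i => if Nat.eqb i i0 then 1 else 0). split.
    + split. intros i _. destruct (Nat.eqb i i0); lra. rewrite (rsum_single n _ i0 Hi0). rewrite Nat.eqb_refl; auto.
      intros k Hk Hne. apply Nat.eqb_neq in Hne. rewrite Hne; auto.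
    + intros u [Hu1 Hu2]. unfold Fw.
      assert (R1 : forall t, 0 <= t -> rpow t m = t) by (intros; rewrite Hm1; apply rpow_1; auto).
      rewrite (rsum_single n _ i0 Hi0). rewrite Nat.eqb_refl, R1 by lra.
      rewrite (rsum_ext n _ (fun i => xi i * u i)). 2:{ intros; rewrite R1; auto. }
      assert (xi i0 * rsum n u <= rsum n (fun i => xi i * u i)).
      { rewrite <- rsum_scal. apply rsum_le. intros i Hi. specialize (Hu1 i Hi). specialize (Hmin i Hi). nra. }
      rewrite Hu2 in H. lra.
      intros k Hk Hne. apply Nat.eqb_neq in Hne. rewrite Hne. rewrite R1 by lra. ring.
  - assert (Hm' : m - 1 > 0) by lra.
    set (a := fun i => Rpower (xi i) (- / (m - 1))).
    set (A := rsum n a).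
    assert (Ha : forall i, 0 < a i) by (intros; apply Rpower_pos).
    assert (HA : 0 < A). { unfold A. eapply Rlt_le_trans; [apply (Ha 0%nat)|]. apply (rsum_term_le n a 0); [lia|]. intros; left; apply Ha. }
    set (us := fun i => a i / A).
    assert (Hus : forall i, 0 < us i) by (intros; unfold us; apply Rdiv_lt_0_compat; auto).
    exists us. split.
    + split. intros; left; auto. unfold us. rewrite (rsum_ext n _ (fun i => / A * a i)) by (intros; unfold Rdiv; ring).
      rewrite rsum_scal. fold A. field. lra.
    + intros u [Hu1 Hu2].
      set (kap := m * Rpower A (1 - m)).
      assert (Hk : forall i, (i < n)%nat -> xi i * (m * Rpower (us i) (m - 1)) = kap).
      { intros i Hi. specialize (Hxi i Hi).
        assert (E1 : Rpower (a i) (m - 1) = / xi i).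
        { unfold a. rewrite Rpower_mult. replace (- / (m - 1) * (m - 1)) with (- (1)) by (field; lra).
          rewrite Rpower_Ropp, Rpower_1 by lra. auto. }
        assert (E2 : Rpower (/ A) (m - 1) = Rpower A (1 - m)).
        { replace (/ A) with (Rpower A (- (1))) by (rewrite Rpower_Ropp, Rpower_1; auto).
          rewrite Rpower_mult. f_equal; ring. }
        unfold kap, us, Rdiv. rewrite <- Rpower_mult_distr by (auto; apply Rinv_0_lt_compat; auto).
        rewrite E1, E2. field. lra. }
      unfold Fw. 
      assert (rsum n (fun i => xi i * (Rpower (us i) m + m * Rpower (us i) (m - 1) * (u i - us i))) <= rsum n (fun i => xi i * rpow (u i) m)).
      { apply rsum_le. intros i Hi. apply Rmult_le_compat_l. specialize (Hxi i Hi); lra. apply tangent; auto. }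
      rewrite (rsum_ext n (fun i => xi i * (Rpower (us i) m + m * Rpower (us i) (m - 1) * (u i - us i)))
         (fun i => xi i * rpow (us i) m + kap * (u i - us i))) in H.
      2:{ intros i Hi. rewrite rpow_posE by auto. rewrite <- (Hk i Hi). ring. }
      rewrite rsum_plus, rsum_scal, rsum_minus in H. rewrite Hu2 in H.
      assert (rsum n us = 1). { unfold us. rewrite (rsum_ext n _ (fun i => / A * a i)) by (intros; unfold Rdiv; ring).
        rewrite rsum_scal. fold A. field. lra. }
      rewrite H0 in H. lra. Qed.

End Rp.

End Cost.
Import Cost.

Module Topo.
Open Scope R_scope.

Lemma norm_ext d f g : (forall k, (k < d)%nat -> f k = g k) -> norm d f = norm d g.
Proof. intros H. unfold norm. f_equal. apply rsum_ext. intros k Hk. rewrite H; auto. Qed.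

Lemma norm_vsub_sym d x y : norm d (vsub x y) = norm d (vsub y x).
Proof. unfold norm. f_equal. apply rsum_ext. intros. unfold vsub. ring. Qed.

Lemma norm_lip d x y : Rabs (norm d y - norm d x) <= norm d (vsub y x).
Proof. assert (H1 : norm d y <= norm d (vsub y x) + norm d x).
  { rewrite (norm_ext d y (fun k => vsub y x k + x k)) by (intros; unfold vsub; ring). apply norm_triang. }
  assert (H2 : norm d x <= norm d (vsub x y) + norm d y).
  { rewrite (norm_ext d x (fun k => vsub x y k + y k)) by (intros; unfold vsub; ring). apply norm_triang. }
  rewrite norm_vsub_sym in H2. apply Rabs_le. lra. Qed.

Lemma norm_cont d : continuous_on_Rd d (norm d).
Proof. intros x Hx eps He. exists eps. split; auto. intros y Hy Hn. eapply Rle_lt_trans. apply norm_lip. auto. Qed.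

Lemma edot_cont d : continuous_on_Rd d (edot d).
Proof. unfold edot. apply (cont_rsum d d (fun k x => x k)). intros; apply cont_coord. Qed.

Lemma abs_cont d f : continuous_on_Rd d f -> continuous_on_Rd d (fun x => Rabs (f x)).
Proof. intros Hf x Hx eps He. destruct (Hf x Hx eps He) as [a [Ha H]]. exists a. split; auto. intros y Hy Hn.
  eapply Rle_lt_trans. apply Rabs_triang_inv2. auto. Qed.

Definition conv d (xs : nat -> nat -> R) y := forall eps, eps > 0 -> exists N, forall n, (n >= N)%nat -> norm d (vsub (xs n) y) < eps.

Lemma closed_le d f c xs y : continuous_on_Rd d f -> (forall n, inRd d (xs n) /\ f (xs n) <= c) -> inRd d y ->
  conv d xs y -> f y <= c.
Proof. intros Hf Hxs Hy Hc. destruct (Rle_dec (f y) c) as [|Hn]; auto. exfalso.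
  destruct (Hf y Hy (f y - c)) as [a [Ha H]]; [lra|]. destruct (Hc a Ha) as [N HN].
  specialize (HN N (le_n _)). destruct (Hxs N) as [H1 H2]. specialize (H (xs N) H1 HN).
  apply Rabs_def2 in H. lra. Qed.

Lemma Kdelta_open d del : is_open d (Kdelta d del).
Proof. intros x Hx [_ HK].
  set (f := fun z => Rabs (edot d z) + - del * norm d z).
  assert (Hf : continuous_on_Rd d f).
  { unfold f. apply (cont_plus d (fun z => Rabs (edot d z)) (fun z => - del * norm d z)).
    apply abs_cont, edot_cont. apply (cont_scal d (- del) (norm d)); apply norm_cont. }
  destruct (Hf x Hx (f x)) as [a [Ha H]]. unfold f; lra.
  exists a. unfold f in H.  split; auto. intros y Hy Hn. split; auto. specialize (H y Hy Hn). apply Rabs_def2 in H. lra.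
Qed.

Lemma closure_K d del y : closure d (Kdelta d del) y -> Rabs (edot d y) >= del * norm d y.
Proof. intros [Hy Hc]. destruct (Rge_dec (Rabs (edot d y)) (del * norm d y)) as [|Hn]; auto. exfalso.
  set (f := fun z => del * norm d z + -1 * Rabs (edot d z)).
  assert (Hf : continuous_on_Rd d f).
  { unfold f. apply (cont_plus d (fun z => del * norm d z) (fun z => -1 * Rabs (edot d z))).
    apply cont_scal, norm_cont. apply (cont_scal d (-1) (fun z => Rabs (edot d z))). apply abs_cont, edot_cont. }
  destruct (Hf y Hy (f y)) as [a [Ha H]]. unfold f; lra.
  destruct (Hc a Ha) as [z [Hz [[_ HK] Hn2]]]. specialize (H z Hz Hn2). apply Rabs_def2 in H. unfold f in H. lra. Qed.

Lemma vsub_triang d a b c : norm d (vsub a c) <= norm d (vsub a b) + norm d (vsub b c).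
Proof. rewrite (norm_ext d (vsub a c) (fun k => vsub a b k + vsub b c k)) by (intros; unfold vsub; ring). apply norm_triang. Qed.

Lemma closure_closed d K xs y : (forall n, inRd d (xs n) /\ closure d K (xs n)) -> inRd d y -> conv d xs y -> closure d K y.
Proof. intros Hxs Hy Hc. split; auto. intros eps He.
  destruct (Hc (eps/2)) as [N HN]. lra. specialize (HN N (le_n _)).
  destruct (Hxs N) as [_ [_ Hcl]]. destruct (Hcl (eps/2)) as [z [Hz [HK Hzn]]]. lra.
  exists z. split; auto. split; auto. pose proof (vsub_triang d z (xs N) y). lra. Qed.

Lemma rpow_norm_cont d m : m >= 1 -> continuous_on_Rd d (fun x => rpow (norm d x) m).
Proof. intros Hm. apply (cont_comp d (fun z => rpow z m) (norm d)). apply norm_cont. intros; apply rpow_cont; auto. Qed.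

End Topo.
Import Topo.

Module RpH.
Open Scope R_scope.

Lemma Rp_mul_t t p : 0 < t -> Rpower t (p - 1) * t = Rpower t p.
Proof. intros Ht. rewrite <- (Rpower_1 t) at 2 by auto. rewrite <- Rpower_plus. f_equal. ring. Qed.

Lemma Rp_mono_exp t a b : 1 <= t -> a <= b -> Rpower t a <= Rpower t b.
Proof. intros. apply Rle_Rpower; auto. Qed.

Lemma t_lemma B a p t : 0 <= B -> 0 < a -> 0 < p -> 1 <= t ->
  B * Rpower t (p - 1) - a * Rpower t p <= B * Rpower (2 * B / a + 1) p - a / 2 * Rpower t p.
Proof. intros HB Ha Hp Ht.
  pose proof (Rpower_pos t p). pose proof (Rpower_pos t (p - 1)).
  assert (HT : 0 <= B * Rpower (2 * B / a + 1) p) by (apply Rmult_le_pos; auto; left; apply Rpower_pos).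
  destruct (Rle_dec (2 * B / a) t) as [Hle|Hlt].
  - assert (B * Rpower t (p - 1) <= a / 2 * Rpower t p).
    { rewrite <- (Rp_mul_t t p) by lra.
      assert (B <= a / 2 * t). { apply Rmult_le_reg_l with (2 / a). apply Rdiv_lt_0_compat; lra.
        replace (2 / a * (a / 2 * t)) with t by (field; lra). replace (2 / a * B) with (2 * B / a) by (field; lra). auto. }
      replace (a / 2 * (Rpower t (p - 1) * t)) with ((a / 2 * t) * Rpower t (p - 1)) by ring.
      apply Rmult_le_compat_r; lra. }
    lra.
  - assert (Rpower t (p - 1) <= Rpower t p) by (apply Rp_mono_exp; lra).
    assert (Rpower t p <= Rpower (2 * B / a + 1) p) by (apply Rle_Rpower_l; lra).
    assert (B * Rpower t (p - 1) <= B * Rpower (2 * B / a + 1) p) by (apply Rmult_le_compat_l; lra).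
    nra. Qed.

Lemma Rp_sq_abs s p : s <> 0 -> Rpower (s * s) p = Rpower (Rabs s) (2 * p).
Proof. intros Hs. assert (0 < Rabs s) by (apply Rabs_pos_lt; auto).
  replace (s * s) with (Rabs s * Rabs s) by (rewrite <- Rabs_mult; apply Rabs_pos_eq; apply Rle_0_sqr).
  rewrite <- Rpower_mult_distr by auto. rewrite <- Rpower_plus. f_equal; ring. Qed.

Lemma growth t C s p : 0 < C -> 0 < p -> 1 <= t -> t <= 1 + C * (s * s) ->
  Rpower t p <= Rpower 2 p + Rpower (2 * C) p * rpow (Rabs s) (2 * p).
Proof. intros HC Hp Ht Hts.
  assert (0 <= Rpower (2 * C) p * rpow (Rabs s) (2 * p)) by (apply Rmult_le_pos; [left; apply Rpower_pos|apply rpow_nonneg]).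
  destruct (Rle_dec (C * (s * s)) 1).
  - assert (Rpower t p <= Rpower 2 p) by (apply Rle_Rpower_l; lra). lra.
  - assert (Hs : s <> 0) by (intros e; subst; lra).
    assert (Rpower t p <= Rpower (2 * C * (s * s)) p) by (apply Rle_Rpower_l; lra).
    rewrite <- Rpower_mult_distr in H0 by (try lra; pose proof (Rle_0_sqr s); unfold Rsqr in *; assert (0 < s * s) by (destruct (Rle_lt_or_eq_dec _ _ H1); auto; exfalso; apply Hs; nra); auto).
    rewrite Rp_sq_abs in H0 by auto. rewrite rpow_posE by (apply Rabs_pos_lt; auto).
    pose proof (Rpower_pos 2 p). lra. Qed.

Lemma lower_pow q N2v nr c0 p : 0 < c0 -> 0 < p -> 0 <= q -> c0 * N2v <= q -> N2v = nr * nr -> 0 <= nr ->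
  Rpower c0 p * rpow nr (2 * p) <= Rpower (1 + q) p.
Proof. intros Hc Hp Hq Hl HN Hnr.
  destruct (Req_dec nr 0) as [e|ne].
  - subst. rewrite rpow_le0 by lra. rewrite Rmult_0_r. left; apply Rpower_pos.
  - rewrite rpow_posE by lra.
    assert (Rpower c0 p * Rpower nr (2 * p) = Rpower (c0 * N2v) p).
    { rewrite HN. rewrite <- Rpower_mult_distr by nra. rewrite <- Rpower_mult_distr by lra. rewrite <- Rpower_plus.
      f_equal. f_equal. ring. }
    rewrite H. assert (0 < nr * nr) by (assert (0 < nr) by lra; nra).
    apply Rle_Rpower_l. lra. split. rewrite HN. apply Rmult_lt_0_compat; lra. lra. Qed.

End RpH.
Import RpH.

Module Main1.
Open Scope R_scope.

Section Gen.
Variables (I J : nat) (adj : nat -> nat -> bool) (lm gam ell : nat -> R) (mu : nat -> nat -> R) (m : R).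
Hypothesis HI : (1 <= I)%nat.
Hypothesis HJ : (1 <= J)%nat.
Hypothesis Htree : is_tree I J adj.
Hypothesis Hlam : forall i, (i < I)%nat -> lm i > 0.
Hypothesis Hmu0 : forall i j, (i < I)%nat -> (j < J)%nat -> adj i j = false -> mu i j = 0.
Hypothesis Hm : m >= 1.
Variable mm : R.
Hypothesis Hmm : mm > 0.
Hypothesis Hmpar : forall k, (k < I)%nat -> mm <= mpar I J adj mu k.

Definition pp := m / 2.
Definition cYm := cY I J adj.
Definition wtm := wt I J adj mu mm.
Definition Wm := W I J adj mu mm.
Definition Lsum := rsum I lm.
Definition Cg := Rabs (pp - 1) * Lsum * (4 * INR I * Wm) + Lsum * (2 * Wm).

Definition Vfin kap := Vg I I cYm wtm pp kap.
Definition DVfin kap := DVg I I cYm wtm pp kap.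
Definition D2Vfin kap := D2Vg I I cYm wtm pp kap.

Lemma Qg_qf x : Qg I I cYm wtm x = qf I J adj mu mm x.
Proof. reflexivity. Qed.
Lemma DQg_Dq i x : DQg I I cYm wtm i x = Dq I J adj mu mm i x.
Proof. reflexivity. Qed.
Lemma D2Qg_D2q i j : D2Qg I cYm wtm i j = D2q I J adj mu mm i j.
Proof. reflexivity. Qed.

Lemma pp_pos : 0 < pp.
Proof. unfold pp; lra. Qed.
Lemma Lsum_nonneg : 0 <= Lsum.
Proof. apply rsum_nonneg. intros; left; apply Hlam; auto. Qed.

Lemma gen_le kap x uc us : kap > 0 -> inU I J uc us ->
  gen I J adj lm gam ell mu (DVfin kap) (D2Vfin kap) x uc us <=
  kap * pp * Rpower (1 + qf I J adj mu mm x) (pp - 1) * (Cg + Gdrift I J adj gam ell mu mm x uc us).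
Proof. intros Hk HU. unfold gen, DVfin, D2Vfin, DVg, D2Vg. rewrite Qg_qf.
  set (q := qf I J adj mu mm x). set (T := 1 + q).
  assert (Hq : 0 <= q) by (apply (qf_nonneg I J adj mu mm Hmm)).
  assert (HT : 0 < T) by (unfold T; lra).
  set (P1 := Rpower T (pp - 1)). set (P2 := Rpower T (pp - 2)).
  assert (HP1 : 0 < P1) by apply Rpower_pos. assert (HP2 : 0 < P2) by apply Rpower_pos.
  assert (HP12 : P2 * T = P1). { unfold P1, P2. replace (pp - 2) with ((pp - 1) - 1) by ring. apply Rp_mul_t; auto. }
  pose proof pp_pos as Hp. pose proof Lsum_nonneg as HL.
  assert (HW : 1 <= Wm) by apply (W_ge1 I J adj mu HI HJ mm Hmm).
  assert (E1 : rsum I (fun i => drift I J adj gam ell mu x uc us i * (kap * pp * P1 * DQg I I cYm wtm i x))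
             = kap * pp * P1 * Gdrift I J adj gam ell mu mm x uc us).
  { unfold Gdrift. rewrite <- rsum_scal. apply rsum_ext. intros i Hi. rewrite DQg_Dq. ring. }
  assert (E2 : rsum I (fun i => lm i * (kap * pp * (pp - 1) * P2 * DQg I I cYm wtm i x * DQg I I cYm wtm i x + kap * pp * P1 * D2Qg I cYm wtm i i))
     <= kap * pp * P1 * Cg).
  { assert (B1 : forall i, (i < I)%nat -> lm i * ((pp - 1) * P2 * (DQg I I cYm wtm i x * DQg I I cYm wtm i x)) <= lm i * (Rabs (pp - 1) * (4 * INR I * Wm) * P1)).
    { intros i Hi. apply Rmult_le_compat_l. left; apply Hlam; auto.
      rewrite DQg_Dq. pose proof (Dq_sq I J adj mu HI HJ mm Hmm i x Hi) as HD. fold Wm in HD. fold q in HD.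
      assert (0 <= Dq I J adj mu mm i x * Dq I J adj mu mm i x) by apply Rle_0_sqr.
      assert ((pp - 1) * P2 * (Dq I J adj mu mm i x * Dq I J adj mu mm i x) <= Rabs (pp - 1) * P2 * (Dq I J adj mu mm i x * Dq I J adj mu mm i x)).
      { apply Rmult_le_compat_r; auto. apply Rmult_le_compat_r. lra. apply RRle_abs. }
      assert (Rabs (pp - 1) * P2 * (Dq I J adj mu mm i x * Dq I J adj mu mm i x) <= Rabs (pp - 1) * P2 * (4 * INR I * Wm * q)).
      { apply Rmult_le_compat_l; auto. apply Rmult_le_pos; [apply Rabs_pos|lra]. }
      assert (Rabs (pp - 1) * P2 * (4 * INR I * Wm * q) <= Rabs (pp - 1) * (4 * INR I * Wm) * P1).
      { rewrite <- HP12. replace (Rabs (pp - 1) * (4 * INR I * Wm) * (P2 * T)) with (Rabs (pp - 1) * P2 * (4 * INR I * Wm * T)) by ring.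
        apply Rmult_le_compat_l. apply Rmult_le_pos; [apply Rabs_pos|lra].
        pose proof (pos_INR I). apply Rmult_le_compat_l. nra. unfold T; lra. }
      lra. }
    assert (B2 : forall i, (i < I)%nat -> lm i * D2Qg I cYm wtm i i <= lm i * (2 * Wm)).
    { intros i Hi. apply Rmult_le_compat_l. left; apply Hlam; auto. rewrite D2Qg_D2q.
      pose proof (D2q_bound I J adj mu mm Hmm i). fold Wm in H. lra. }
    rewrite (rsum_ext I _ (fun i => kap * pp * (lm i * ((pp - 1) * P2 * (DQg I I cYm wtm i x * DQg I I cYm wtm i x)))
                                 + kap * pp * P1 * (lm i * D2Qg I cYm wtm i i))) by (intros; ring).
    rewrite rsum_plus, !rsum_scal.
    assert (rsum I (fun i => lm i * ((pp - 1) * P2 * (DQg I I cYm wtm i x * DQg I I cYm wtm i x))) <= Rabs (pp - 1) * (4 * INR I * Wm) * P1 * Lsum).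
    { unfold Lsum. rewrite <- rsum_scal. eapply Rle_trans. apply rsum_le. apply B1. right. apply rsum_ext. intros; ring. }
    assert (rsum I (fun i => lm i * D2Qg I cYm wtm i i) <= 2 * Wm * Lsum).
    { unfold Lsum. rewrite <- rsum_scal. eapply Rle_trans. apply rsum_le. apply B2. right. apply rsum_ext. intros; ring. }
    assert (Hkp : 0 < kap * pp) by nra.
    unfold Cg.
    assert (kap * pp * rsum I (fun i => lm i * ((pp - 1) * P2 * (DQg I I cYm wtm i x * DQg I I cYm wtm i x))) <= kap * pp * (Rabs (pp - 1) * (4 * INR I * Wm) * P1 * Lsum)) by (apply Rmult_le_compat_l; lra).
    assert (kap * pp * P1 * rsum I (fun i => lm i * D2Qg I cYm wtm i i) <= kap * pp * P1 * (2 * Wm * Lsum)) by (apply Rmult_le_compat_l; nra).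
    nra. }
  fold T. fold P1. fold P2.
  rewrite E1. lra. Qed.

End Gen.

End Main1.
Import Main1.

Module Main2.
Open Scope R_scope.

Lemma ppart_eq s : ppart s = (s + Rabs s) / 2.
Proof. unfold ppart, Rmax, Rabs. destruct (Rle_dec s 0), (Rcase_abs s); lra. Qed.
Lemma npart_eq s : npart s = (Rabs s - s) / 2.
Proof. unfold npart, Rmax, Rabs. destruct (Rle_dec (-s) 0), (Rcase_abs s); lra. Qed.

Lemma rpow_pn_sum s m : m >= 1 -> rpow (ppart s) m + rpow (npart s) m = rpow (Rabs s) m.
Proof. intros Hm. rewrite ppart_eq, npart_eq. unfold Rabs. destruct (Rcase_abs s).
  - rewrite (rpow_le0 m (( s + - s) / 2)) by lra. replace ((- s - s) / 2) with (- s) by field. ring.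
  - rewrite (rpow_le0 m ((s - s) / 2)) by lra. replace ((s + s) / 2) with s by field. ring. Qed.

Lemma bounded_by_rpow m a L : m >= 1 -> 0 <= a -> rpow a m <= L -> a <= Rmax 1 L.
Proof. intros Hm Ha H. destruct (Rle_dec a 1). pose proof (Rmax_l 1 L); lra.
  pose proof (rpow_ge_self m Hm a ltac:(lra)). pose proof (Rmax_r 1 L). lra. Qed.

Lemma lip_cont (f : R -> R) x : (forall a b, Rabs (f a - f b) <= Rabs (a - b)) -> continuity_pt f x.
Proof. intros H eps He. exists eps. split; auto. intros y [_ Hy]. simpl in *. unfold R_dist in *.
  eapply Rle_lt_trans. apply H. auto. Qed.
Lemma ppart_lip a b : Rabs (ppart a - ppart b) <= Rabs (a - b).
Proof. rewrite !ppart_eq. pose proof (Rabs_triang_inv a b). pose proof (Rabs_triang_inv b a).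
  rewrite (Rabs_minus_sym b a) in H0. apply Rabs_le. split.
  - assert (Rabs a - Rabs b >= - Rabs (a - b)) by lra. pose proof (Rabs_Ropp (a - b)). 
    pose proof (RRle_abs (a - b)). pose proof (RRle_abs (- (a - b))). rewrite H2 in H4. lra.
  - pose proof (RRle_abs (a - b)). pose proof (RRle_abs (- (a - b))). rewrite Rabs_Ropp in H2. lra. Qed.
Lemma npart_lip a b : Rabs (npart a - npart b) <= Rabs (a - b).
Proof. rewrite !npart_eq. pose proof (Rabs_triang_inv a b). pose proof (Rabs_triang_inv b a).
  rewrite (Rabs_minus_sym b a) in H0. apply Rabs_le. split.
  - pose proof (RRle_abs (a - b)). pose proof (RRle_abs (- (a - b))). rewrite Rabs_Ropp in H2. lra.
  - pose proof (RRle_abs (a - b)). pose proof (RRle_abs (- (a - b))). rewrite Rabs_Ropp in H2. lra. Qed.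

Definition e0 (i : nat) : R := if Nat.eqb i 0 then 1 else 0.
Lemma e0_simplex n : (1 <= n)%nat -> (forall i, (i < n)%nat -> 0 <= e0 i) /\ rsum n e0 = 1.
Proof. intros Hn. split. intros; unfold e0; destruct (Nat.eqb i 0); lra.
  rewrite (rsum_single n e0 0) by (try lia; intros k _ Hk; unfold e0; apply Nat.eqb_neq in Hk; rewrite Hk; auto). reflexivity. Qed.

Section Final.
Variables (I J : nat) (adj : nat -> nat -> bool) (lm gam ell : nat -> R) (mu : nat -> nat -> R) (m : R) (xi zeta : nat -> R).
Hypothesis HI : (1 <= I)%nat.
Hypothesis HJ : (1 <= J)%nat.
Hypothesis Htree : is_tree I J adj.
Hypothesis Hlam : forall i, (i < I)%nat -> lm i > 0.
Hypothesis Hmu0 : forall i j, (i < I)%nat -> (j < J)%nat -> adj i j = false -> mu i j = 0.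
Hypothesis Hm : m >= 1.
Hypothesis Hxi : forall i, (i < I)%nat -> xi i > 0.
Hypothesis Hzeta : forall j, (j < J)%nat -> zeta j > 0.
Variable mm : R.
Hypothesis Hmm : mm > 0.
Hypothesis Hmpar : forall k, (k < I)%nat -> mm <= mpar I J adj mu k.

Lemma inU_e0 : inU I J e0 e0.
Proof. destruct (e0_simplex I HI), (e0_simplex J HJ). repeat split; auto. Qed.

Notation rc := (rcost I J m xi zeta).

Lemma min_ex : exists ucs uss, inU I J ucs uss /\
   (forall uc us, inU I J uc us -> Fw m I xi ucs <= Fw m I xi uc /\ Fw m J zeta uss <= Fw m J zeta us).
Proof. destruct (minimizer m Hm I xi HI Hxi) as [ucs [Hu1 Hu2]]. destruct (minimizer m Hm J zeta HJ Hzeta) as [uss [Hv1 Hv2]].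
  exists ucs, uss. split. destruct Hu1, Hv1. repeat split; auto.
  intros uc us [H1 [H2 [H3 H4]]]. split; [apply Hu2|apply Hv2]; split; auto. Qed.

Section WithMin.
Variables (ucs uss : nat -> R).
Hypothesis Hus : inU I J ucs uss.
Hypothesis Hmin : forall uc us, inU I J uc us -> Fw m I xi ucs <= Fw m I xi uc /\ Fw m J zeta uss <= Fw m J zeta us.

Definition Fx := Fw m I xi ucs.
Definition Fz := Fw m J zeta uss.
Definition cr := Rmin Fx Fz.
Definition Phi x := rpow (ppart (edot I x)) m * Fx + rpow (npart (edot I x)) m * Fz.

Lemma Fx_pos : 0 < Fx.
Proof. destruct Hus as [H1 [_ [H3 _]]]. apply (Fw_pos m I xi ucs Hxi). split; auto. Qed.
Lemma Fz_pos : 0 < Fz.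
Proof. destruct Hus as [_ [H2 [_ H4]]]. apply (Fw_pos m J zeta uss Hzeta). split; auto. Qed.
Lemma cr_pos : 0 < cr.
Proof. unfold cr. apply Rmin_pos; [apply Fx_pos|apply Fz_pos]. Qed.

Lemma rc_ge_Phi x uc us : inU I J uc us -> Phi x <= rc x uc us.
Proof. intros HU. destruct (Hmin uc us HU) as [A B]. unfold Phi, rcost. fold (Fw m I xi uc). fold (Fw m J zeta us).
  pose proof (rpow_nonneg m (ppart (edot I x))). pose proof (rpow_nonneg m (npart (edot I x))).
  unfold Fx, Fz. apply Rplus_le_compat; apply Rmult_le_compat_l; auto. Qed.
Lemma rc_eq_Phi x : rc x ucs uss = Phi x.
Proof. reflexivity. Qed.
Lemma Phi_ge x : cr * rpow (Rabs (edot I x)) m <= Phi x.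
Proof. unfold Phi. rewrite <- (rpow_pn_sum (edot I x) m Hm).
  pose proof (rpow_nonneg m (ppart (edot I x))). pose proof (rpow_nonneg m (npart (edot I x))).
  pose proof (Rmin_l Fx Fz). pose proof (Rmin_r Fx Fz). fold cr in H1, H2. nra. Qed.

Lemma Phi_cont : continuous_on_Rd I Phi.
Proof. unfold Phi. apply cont_plus; apply cont_mult; try apply cont_const.
  - apply (cont_comp I (fun z => rpow z m) (fun x => ppart (edot I x))); [|intros; apply rpow_cont; auto].
    apply (cont_comp I ppart (edot I)). apply edot_cont. intros x _.
    apply lip_cont, ppart_lip.
  - apply (cont_comp I (fun z => rpow z m) (fun x => npart (edot I x))); [|intros; apply rpow_cont; auto].
    apply (cont_comp I npart (edot I)). apply edot_cont. intros x _.
    apply lip_cont, npart_lip.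
Qed.

Lemma minU_r_iff lvl x : minU_le I J rc lvl x <-> inRd I x /\ Phi x <= lvl.
Proof. split.
  - intros [Hx [uc [us [HU Hr]]]]. split; auto. pose proof (rc_ge_Phi x uc us HU). lra.
  - intros [Hx HP]. split; auto. exists ucs, uss. split; [exact Hus|exact HP]. Qed.

Definition c1v := c1 I mm.
Definition C12v := C12 I J adj mu mm.
Definition K1v := K1 I J adj gam mu.
Definition K2v := K2 I ell.
Definition c0v := c0 I.
Definition C0v := C0 I J adj mu mm.
Definition Cgv := Cg I J adj lm mu m mm.
Definition del := c1v / (2 * (C12v * K1v + 1)).
Definition aa := c1v / (4 * C0v).
Definition B0 := (C12v * K2v) * (C12v * K2v) / c1v.
Definition Bb := Cgv + B0 + aa.
Definition T0 := 2 * Bb / aa + 1.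
Definition Dp := C12v * K1v * INR I / c0v + C12v * K2v * (1 + / c0v).
Definition R2 := Rpower 2 (pp m).
Definition RC := Rpower (2 * (C0v / (del * del))) (pp m).
Definition kap := / (1 + pp m * Bb * Rpower T0 (pp m) + pp m * (Cgv + Dp) * R2 + pp m * (Cgv + Dp) * RC / cr).
Definition Ct := kap * pp m * (aa / 2) * Rpower c0v (pp m).

Lemma c0v_pos : 0 < c0v.
Proof. unfold c0v, c0. apply Rinv_0_lt_compat. pose proof (INR_I_pos I J HI HJ). nra. Qed.
Lemma c1v_pos : 0 < c1v.
Proof. unfold c1v, c1. pose proof c0v_pos. unfold c0v in H. nra. Qed.
Lemma W_ge : 1 <= W I J adj mu mm.
Proof. apply (W_ge1 I J adj mu HI HJ mm Hmm). Qed.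
Lemma C12v_nonneg : 0 <= C12v.
Proof. unfold C12v, C12. pose proof W_ge. pose proof (pos_INR I). 
  apply Rmult_le_pos; [apply Rmult_le_pos|auto]; [|auto]. lra. Qed.
Lemma C0v_pos : 0 < C0v.
Proof. unfold C0v, C0. pose proof W_ge. pose proof (INR_I_pos I J HI HJ). apply Rmult_lt_0_compat. lra.
  apply Rmult_lt_0_compat; auto. apply Rmult_lt_0_compat; auto. Qed.
Lemma K1v_nonneg : 0 <= K1v.
Proof. unfold K1v, K1, Mp, MA, Mn, Mg.
  assert (forall n f, 0 <= rsum n (fun k => Rabs (f k))) by (intros; apply rsum_nonneg; intros; apply Rabs_pos).
  pose proof (H I (mpar I J adj mu)). pose proof (H I (Acoef I J adj mu)). pose proof (H J (npar I J adj mu)). pose proof (H I gam). lra. Qed.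
Lemma K2v_nonneg : 0 <= K2v.
Proof. unfold K2v, K2, Ml. apply rsum_nonneg; intros; apply Rabs_pos. Qed.
Lemma Cgv_nonneg : 0 <= Cgv.
Proof. unfold Cgv, Cg. pose proof (Lsum_nonneg I lm Hlam). pose proof W_ge. fold (Wm I J adj mu mm).
  unfold Wm in *. pose proof (pos_INR I). pose proof (Rabs_pos (pp m - 1)).
  apply Rplus_le_le_0_compat; repeat apply Rmult_le_pos; lra. Qed.
Lemma del_pos : 0 < del.
Proof. unfold del. pose proof c1v_pos. pose proof C12v_nonneg. pose proof K1v_nonneg. apply Rdiv_lt_0_compat; nra. Qed.
Lemma aa_pos : 0 < aa.
Proof. unfold aa. pose proof c1v_pos. pose proof C0v_pos. apply Rdiv_lt_0_compat; lra. Qed.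
Lemma B0_nonneg : 0 <= B0.
Proof. unfold B0. pose proof c1v_pos. apply Rle_mult_inv_pos; auto. apply Rle_0_sqr. Qed.
Lemma Bb_nonneg : 0 <= Bb.
Proof. unfold Bb. pose proof Cgv_nonneg. pose proof B0_nonneg. pose proof aa_pos. lra. Qed.
Lemma Dp_nonneg : 0 <= Dp.
Proof. unfold Dp. pose proof c0v_pos. pose proof C12v_nonneg. pose proof K1v_nonneg. pose proof K2v_nonneg. pose proof (pos_INR I).
  assert (0 < / c0v) by (apply Rinv_0_lt_compat; auto).
  assert (0 <= C12v * K1v * INR I) by (apply Rmult_le_pos; [apply Rmult_le_pos|]; auto).
  assert (0 <= C12v * K2v) by (apply Rmult_le_pos; auto).
  apply Rplus_le_le_0_compat. apply Rle_mult_inv_pos; auto. apply Rmult_le_pos; lra. Qed.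
Lemma pp_eq : 2 * pp m = m.
Proof. unfold pp. field. Qed.
Definition Dden := 1 + pp m * Bb * Rpower T0 (pp m) + pp m * (Cgv + Dp) * R2 + pp m * (Cgv + Dp) * RC / cr.
Lemma Dden_pos : 0 < Dden.
Proof. unfold Dden.
  pose proof (pp_pos m Hm). pose proof Bb_nonneg. pose proof Cgv_nonneg. pose proof Dp_nonneg. pose proof cr_pos.
  pose proof (Rpower_pos T0 (pp m)). pose proof (Rpower_pos 2 (pp m)). pose proof (Rpower_pos (2 * (C0v / (del * del))) (pp m)).
  fold R2 RC in *.
  assert (0 <= pp m * Bb * Rpower T0 (pp m)) by (repeat apply Rmult_le_pos; lra).
  assert (0 <= pp m * (Cgv + Dp) * R2) by (repeat apply Rmult_le_pos; lra).
  assert (0 <= pp m * (Cgv + Dp) * RC / cr) by (apply Rle_mult_inv_pos; auto; repeat apply Rmult_le_pos; lra).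
  lra. Qed.
Lemma kap_pos : 0 < kap.
Proof. unfold kap. apply Rinv_0_lt_compat. apply Dden_pos. Qed.
Lemma Ct_pos : 0 < Ct.
Proof. unfold Ct. pose proof kap_pos. pose proof (pp_pos m Hm). pose proof aa_pos. pose proof (Rpower_pos c0v (pp m)).
  assert (0 < aa / 2) by lra. apply Rmult_lt_0_compat; auto. apply Rmult_lt_0_compat; auto. apply Rmult_lt_0_compat; auto. Qed.

Lemma kap_le_inv X : 0 <= X -> X <= 1 + pp m * Bb * Rpower T0 (pp m) + pp m * (Cgv + Dp) * R2 + pp m * (Cgv + Dp) * RC / cr -> kap * X <= 1.
Proof. intros H0 H1. unfold kap. set (D := 1 + pp m * Bb * Rpower T0 (pp m) + pp m * (Cgv + Dp) * R2 + pp m * (Cgv + Dp) * RC / cr) in *.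
  assert (0 < D) by apply Dden_pos. apply Rmult_le_reg_l with D; auto. rewrite <- Rmult_assoc, Rinv_r by lra. lra. Qed.

Notation genk x uc us := (gen I J adj lm gam ell mu (DVfin I J adj mu m mm kap) (D2Vfin I J adj mu m mm kap) x uc us).

Lemma out_bound x uc us : inRd I x -> inU I J uc us -> ~ Kdelta I del x ->
  genk x uc us <= 1 - Ct * rpow (norm I x) m.
Proof. intros Hx HU HK.
  assert (Hs : Rabs (edot I x) <= del * norm I x). { destruct (Rle_dec (Rabs (edot I x)) (del * norm I x)); auto. exfalso; apply HK; split; auto; lra. }
  pose proof (Gdrift_bound I J adj gam ell mu HI HJ Htree Hmu0 mm Hmm Hmpar x uc us HU) as HG.
  fold c1v C12v K1v K2v in HG. unfold sx in HG.
  set (G := Gdrift I J adj gam ell mu mm x uc us) in *.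
  set (nx := norm I x) in *. set (N := N2 I x) in *.
  assert (HN : nx * nx = N) by apply norm_sq. assert (Hnx : 0 <= nx) by apply norm_nonneg.
  pose proof c1v_pos. pose proof C12v_nonneg. pose proof K1v_nonneg. pose proof K2v_nonneg. pose proof C0v_pos. pose proof del_pos.
  assert (T1 : C12v * K1v * Rabs (edot I x) * nx <= c1v / 2 * N).
  { assert (C12v * K1v * del <= c1v / 2).
    { unfold del. apply Rmult_le_reg_r with (2 * (C12v * K1v + 1)). nra.
      replace (C12v * K1v * (c1v / (2 * (C12v * K1v + 1))) * (2 * (C12v * K1v + 1))) with (C12v * K1v * c1v) by (field; nra).
      nra. }
    assert (C12v * K1v * Rabs (edot I x) * nx <= C12v * K1v * (del * nx) * nx).
    { apply Rmult_le_compat_r; auto. apply Rmult_le_compat_l; nra. }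
    assert (C12v * K1v * (del * nx) * nx = (C12v * K1v * del) * N) by (rewrite <- HN; ring).
    assert (0 <= N) by (rewrite <- HN; nra). nra. }
  assert (T2 : C12v * K2v * nx <= c1v / 4 * N + B0).
  { unfold B0. set (C := C12v * K2v). assert (0 <= (c1v * nx / 2 - C) * (c1v * nx / 2 - C)) by apply Rle_0_sqr.
    apply Rmult_le_reg_l with c1v; auto. replace (c1v * (c1v / 4 * N + C * C / c1v)) with (c1v * c1v / 4 * N + C * C) by (field; lra).
    rewrite <- HN. nra. }
  assert (HG2 : G <= - (c1v / 4) * N + B0) by nra.
  pose proof (qf_upper I J adj mu HI HJ mm Hmm x) as Hqu. fold C0v in Hqu. fold N in Hqu.
  set (q := qf I J adj mu mm x) in *.
  assert (HG3 : G <= B0 - aa * q).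
  { unfold aa. assert (c1v / (4 * C0v) * q <= c1v / 4 * N).
    { apply Rmult_le_reg_l with (4 * C0v). lra. replace (4 * C0v * (c1v / (4 * C0v) * q)) with (c1v * q) by (field; lra).
      replace (4 * C0v * (c1v / 4 * N)) with (c1v * (C0v * N)) by field. apply Rmult_le_compat_l; lra. }
    lra. }
  pose proof (gen_le I J adj lm gam ell mu m HI HJ Hlam Hm mm Hmm kap x uc us kap_pos HU) as Hgen.
  fold G q Cgv in Hgen.
  assert (Hq : 0 <= q) by apply (qf_nonneg I J adj mu mm Hmm).
  set (T := 1 + q) in *. assert (HT : 1 <= T) by (unfold T; lra).
  pose proof (pp_pos m Hm) as Hp. pose proof kap_pos as Hk.
  set (P1 := Rpower T (pp m - 1)) in *. assert (HP1 : 0 < P1) by apply Rpower_pos.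
  assert (Hgen2 : genk x uc us <= kap * pp m * (Bb * P1 - aa * Rpower T (pp m))).
  { eapply Rle_trans. apply Hgen. 
    assert (E : Bb * P1 - aa * Rpower T (pp m) = P1 * (Cgv + B0 - aa * q)).
    { rewrite <- (Rp_mul_t T (pp m)) by lra. fold P1. unfold Bb, T. ring. }
    rewrite E. replace (kap * pp m * P1 * (Cgv + G)) with (kap * pp m * (P1 * (Cgv + G))) by ring.
    apply Rmult_le_compat_l. nra. apply Rmult_le_compat_l; lra. }
  pose proof (t_lemma Bb aa (pp m) T Bb_nonneg aa_pos Hp HT) as Htl. fold T0 P1 in Htl.
  pose proof (qf_lower I J adj mu HI HJ Htree mm Hmm x) as Hql. fold c0v N q in Hql.
  pose proof (lower_pow q N nx c0v (pp m) c0v_pos Hp Hq Hql (eq_sym HN) Hnx) as Hlp.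
  rewrite pp_eq in Hlp. fold T in Hlp.
  assert (genk x uc us <= kap * pp m * Bb * Rpower T0 (pp m) - Ct * rpow nx m).
  { unfold Ct. pose proof aa_pos.
    assert (kap * pp m * (aa / 2) * (Rpower c0v (pp m) * rpow nx m) <= kap * pp m * (aa / 2) * Rpower T (pp m)).
    { apply Rmult_le_compat_l; auto. apply Rmult_le_pos; [nra|lra]. }
    assert (kap * pp m * (Bb * P1 - aa * Rpower T (pp m)) <= kap * pp m * (Bb * Rpower T0 (pp m) - aa / 2 * Rpower T (pp m))).
    { apply Rmult_le_compat_l; nra. }
    nra. }
  assert (kap * (pp m * Bb * Rpower T0 (pp m)) <= 1).
  { apply kap_le_inv. pose proof Bb_nonneg. pose proof (Rpower_pos T0 (pp m)). repeat apply Rmult_le_pos; lra.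
    pose proof Cgv_nonneg. pose proof Dp_nonneg. pose proof cr_pos.
    pose proof (Rpower_pos 2 (pp m)). pose proof (Rpower_pos (2 * (C0v / (del * del))) (pp m)). fold R2 RC in *.
    assert (0 <= pp m * (Cgv + Dp) * R2) by (repeat apply Rmult_le_pos; lra).
    assert (0 <= pp m * (Cgv + Dp) * RC / cr) by (apply Rle_mult_inv_pos; auto; repeat apply Rmult_le_pos; lra).
    lra. }
  lra. Qed.

Lemma in_bound x uc us : inRd I x -> inU I J uc us -> Kdelta I del x ->
  genk x uc us <= 1 + rc x uc us.
Proof. intros Hx HU [_ HK].
  pose proof (Gdrift_bound I J adj gam ell mu HI HJ Htree Hmu0 mm Hmm Hmpar x uc us HU) as HG.
  fold c1v C12v K1v K2v in HG. unfold sx in HG.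
  set (G := Gdrift I J adj gam ell mu mm x uc us) in *.
  set (nx := norm I x) in *. set (N := N2 I x) in *.
  assert (HN : nx * nx = N) by apply norm_sq. assert (Hnx : 0 <= nx) by apply norm_nonneg.
  assert (HN0 : 0 <= N) by (rewrite <- HN; nra).
  pose proof c1v_pos. pose proof C12v_nonneg. pose proof K1v_nonneg. pose proof K2v_nonneg. pose proof C0v_pos. pose proof del_pos. pose proof c0v_pos.
  pose proof (qf_lower I J adj mu HI HJ Htree mm Hmm x) as Hql. fold c0v N in Hql.
  pose proof (qf_upper I J adj mu HI HJ mm Hmm x) as Hqu. fold C0v N in Hqu.
  set (q := qf I J adj mu mm x) in *.
  assert (Hq : 0 <= q) by apply (qf_nonneg I J adj mu mm Hmm).
  set (T := 1 + q) in *. assert (HT : 1 <= T) by (unfold T; lra).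
  assert (HNT : N <= T / c0v). { apply Rmult_le_reg_l with c0v; auto. replace (c0v * (T / c0v)) with T by (field; lra). unfold T; lra. }
  assert (HGD : G <= Dp * T).
  { pose proof (edot_le I x) as He. fold nx in He.
    assert (C12v * K1v * Rabs (edot I x) * nx <= C12v * K1v * INR I / c0v * T).
    { assert (C12v * K1v * Rabs (edot I x) * nx <= C12v * K1v * (INR I * N)).
      { rewrite <- HN. replace (C12v * K1v * Rabs (edot I x) * nx) with (C12v * K1v * (Rabs (edot I x) * nx)) by ring.
        apply Rmult_le_compat_l. nra. replace (INR I * (nx * nx)) with ((INR I * nx) * nx) by ring. apply Rmult_le_compat_r; auto. }
      assert (C12v * K1v * (INR I * N) <= C12v * K1v * (INR I * (T / c0v))).
      { apply Rmult_le_compat_l. nra. apply Rmult_le_compat_l; auto. apply pos_INR. }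
      replace (C12v * K1v * INR I / c0v * T) with (C12v * K1v * (INR I * (T / c0v))) by (field; lra). lra. }
    assert (C12v * K2v * nx <= C12v * K2v * (1 + / c0v) * T).
    { assert (nx <= 1 + N) by nra. assert (1 + N <= (1 + / c0v) * T).
      { replace ((1 + / c0v) * T) with (T + T / c0v) by (field; lra). lra. }
      replace (C12v * K2v * (1 + / c0v) * T) with (C12v * K2v * ((1 + / c0v) * T)) by ring.
      apply Rmult_le_compat_l; nra. }
    unfold Dp. nra. }
  pose proof (gen_le I J adj lm gam ell mu m HI HJ Hlam Hm mm Hmm kap x uc us kap_pos HU) as Hgen.
  fold G q Cgv T in Hgen.
  pose proof (pp_pos m Hm) as Hp. pose proof kap_pos as Hk. pose proof Cgv_nonneg. pose proof Dp_nonneg.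
  set (P1 := Rpower T (pp m - 1)) in *. assert (HP1 : 0 < P1) by apply Rpower_pos.
  assert (Hgen2 : genk x uc us <= kap * pp m * (Cgv + Dp) * Rpower T (pp m)).
  { eapply Rle_trans. apply Hgen. rewrite <- (Rp_mul_t T (pp m)) by lra. fold P1.
    replace (kap * pp m * P1 * (Cgv + G)) with (kap * pp m * (P1 * (Cgv + G))) by ring.
    replace (kap * pp m * (Cgv + Dp) * (P1 * T)) with (kap * pp m * (P1 * ((Cgv + Dp) * T))) by ring.
    apply Rmult_le_compat_l. nra. apply Rmult_le_compat_l. lra. nra. }
  set (s := edot I x) in *.
  assert (HTs : T <= 1 + C0v / (del * del) * (s * s)).
  { assert (del * del * N <= s * s).
    { rewrite <- HN. assert (Z1 : del * nx <= Rabs s) by lra. assert (Z2 : 0 <= del * nx) by nra.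
      assert (Z3 : (del * nx) * (del * nx) <= Rabs s * Rabs s) by (apply Rmult_le_compat; auto).
      rewrite <- Rabs_mult in Z3. rewrite Rabs_pos_eq in Z3 by apply Rle_0_sqr. nra. }
    assert (N <= s * s / (del * del)). { apply Rmult_le_reg_l with (del * del). nra. 
      replace (del * del * (s * s / (del * del))) with (s * s) by (field; lra). lra. }
    replace (C0v / (del * del) * (s * s)) with (C0v * (s * s / (del * del))) by (field; lra).
    unfold T. assert (C0v * N <= C0v * (s * s / (del * del))) by (apply Rmult_le_compat_l; lra). lra. }
  assert (HCd : 0 < C0v / (del * del)) by (apply Rdiv_lt_0_compat; nra).
  pose proof (growth T (C0v / (del * del)) s (pp m) HCd Hp HT HTs) as Hgr. rewrite pp_eq in Hgr. fold R2 RC in Hgr.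
  pose proof (Phi_ge x) as HPhi. fold s in HPhi. pose proof (rc_ge_Phi x uc us HU) as HrP.
  pose proof cr_pos as Hcr.
  assert (Hrp : rpow (Rabs s) m <= rc x uc us / cr).
  { apply Rmult_le_reg_l with cr; auto. replace (cr * (rc x uc us / cr)) with (rc x uc us) by (field; lra). lra. }
  assert (Hrc0 : 0 <= rc x uc us). { pose proof (rpow_nonneg m (Rabs s)). nra. }
  pose proof (Rpower_pos 2 (pp m)). pose proof (Rpower_pos (2 * (C0v / (del * del))) (pp m)). fold R2 RC in *.
  set (Z := kap * pp m * (Cgv + Dp)).
  assert (HZ : 0 <= Z) by (unfold Z; repeat apply Rmult_le_pos; lra).
  assert (genk x uc us <= Z * R2 + Z * RC / cr * rc x uc us).
  { eapply Rle_trans. apply Hgen2. fold Z.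
    assert (Z * Rpower T (pp m) <= Z * (R2 + RC * rpow (Rabs s) m)) by (apply Rmult_le_compat_l; auto).
    assert (Z * RC * rpow (Rabs s) m <= Z * RC * (rc x uc us / cr)).
    { apply Rmult_le_compat_l; auto. apply Rmult_le_pos; lra. }
    replace (Z * RC / cr * rc x uc us) with (Z * RC * (rc x uc us / cr)) by (field; lra). nra. }
  assert (A1 : Z * R2 <= 1).
  { unfold Z. replace (kap * pp m * (Cgv + Dp) * R2) with (kap * (pp m * (Cgv + Dp) * R2)) by ring.
    apply kap_le_inv. repeat apply Rmult_le_pos; lra.
    pose proof Bb_nonneg. pose proof (Rpower_pos T0 (pp m)).
    assert (0 <= pp m * Bb * Rpower T0 (pp m)) by (repeat apply Rmult_le_pos; lra).
    assert (0 <= pp m * (Cgv + Dp) * RC / cr) by (apply Rle_mult_inv_pos; auto; repeat apply Rmult_le_pos; lra). lra. }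
  assert (A2 : Z * RC / cr <= 1).
  { unfold Z. replace (kap * pp m * (Cgv + Dp) * RC / cr) with (kap * (pp m * (Cgv + Dp) * RC / cr)) by (field; lra).
    apply kap_le_inv. apply Rle_mult_inv_pos; auto; repeat apply Rmult_le_pos; lra.
    pose proof Bb_nonneg. pose proof (Rpower_pos T0 (pp m)).
    assert (0 <= pp m * Bb * Rpower T0 (pp m)) by (repeat apply Rmult_le_pos; lra).
    assert (0 <= pp m * (Cgv + Dp) * R2) by (repeat apply Rmult_le_pos; lra). lra. }
  assert (Z * RC / cr * rc x uc us <= 1 * rc x uc us) by (apply Rmult_le_compat_r; auto).
  lra. Qed.

Definition hfun : cost := fun x _ _ => Ct * rpow (norm I x) m.

Lemma Vcont : continuous_on_Rd I (Vfin I J adj mu m mm kap).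
Proof. destruct (Vg_C2 I I (cYm I J adj) (wtm I J adj mu mm) (pp m) kap) as [H _].
  intros; pose proof (wt_ge1 I J adj mu mm Hmm v); unfold wtm; lra. exact H. Qed.

Lemma hypA : HypothesisA I J adj lm gam ell mu rc (Kdelta I del) hfun.
Proof.
  pose proof del_pos as Hdel. pose proof cr_pos as Hcr. pose proof Ct_pos as HCt. pose proof kap_pos as Hk.
  split; [apply Kdelta_open|]. split; [|split; [|split; [|split]]].
  -
    intros lvl. split.
    + exists (Rmax 1 (lvl / cr) / del). intros x Hx [Hcl Hmu].
      apply (minU_r_iff lvl x) in Hmu. destruct Hmu as [_ HP].
      pose proof (closure_K I del x Hcl) as Hc. pose proof (Phi_ge x) as HPg.
      assert (rpow (Rabs (edot I x)) m <= lvl / cr).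
      { apply Rmult_le_reg_l with cr; auto. replace (cr * (lvl / cr)) with lvl by (field; lra). lra. }
      pose proof (bounded_by_rpow m _ _ Hm (Rabs_pos _) H).
      apply Rmult_le_reg_l with del; auto. replace (del * (Rmax 1 (lvl / cr) / del)) with (Rmax 1 (lvl / cr)) by (field; lra). lra.
    + intros xs y Hxs Hy Hc. split.
      * apply (closure_closed I (Kdelta I del) xs y); auto. intros n; destruct (Hxs n) as [A [B _]]; auto.
      * apply (minU_r_iff lvl y). split; auto. apply (closed_le I Phi lvl xs y Phi_cont); auto.
        intros n. destruct (Hxs n) as [A [_ B]]. apply (minU_r_iff lvl (xs n)) in B. tauto.
  - intros x uc us _ _. unfold hfun. pose proof (rpow_nonneg m (norm I x)). nra.
  - intros x uc us Hx HU eps He. unfold hfun.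
    assert (Hc : continuous_on_Rd I (fun z => Ct * rpow (norm I z) m)) by (apply cont_scal, rpow_norm_cont; auto).
    destruct (Hc x Hx eps He) as [eta [Heta H]]. exists eta. split; auto.
    intros y vc vs Hy HV Hn. apply H; auto.
    assert (0 <= rsum I (fun i => Rabs (vc i - uc i))) by (apply rsum_nonneg; intros; apply Rabs_pos).
    assert (0 <= rsum J (fun j => Rabs (vs j - us j))) by (apply rsum_nonneg; intros; apply Rabs_pos). lra.
  - intros lvl. split.
    + exists (Rmax 1 (lvl / Ct)). intros x Hx [_ [uc [us [HU Hh]]]]. unfold hfun in Hh.
      apply (bounded_by_rpow m); auto. apply norm_nonneg.
      apply Rmult_le_reg_l with Ct; auto. replace (Ct * (lvl / Ct)) with lvl by (field; lra). lra.
    + intros xs y Hxs Hy Hc. split; auto. exists e0, e0. split; [apply inU_e0|]. unfold hfun.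
      apply (closed_le I (fun z => Ct * rpow (norm I z) m) lvl xs y); auto.
      apply cont_scal, rpow_norm_cont; auto.
      intros n. destruct (Hxs n) as [A [_ [uc [us [_ B]]]]]. split; auto.
  - exists (Vfin I J adj mu m mm kap), (DVfin I J adj mu m mm kap), (D2Vfin I J adj mu m mm kap).
    split; [|split; [|split; [|split]]].
    + apply Vg_C2. intros; pose proof (wt_ge1 I J adj mu mm Hmm v); unfold wtm; lra.
    + intros x _. unfold Vfin, Vg. left. apply Rmult_lt_0_compat; auto. apply Rpower_pos.
    + intros lvl. split.
      * exists (Rmax 1 (lvl / (kap * Rpower c0v (pp m)))). intros x Hx [_ HV].
        unfold Vfin, Vg in HV. rewrite Qg_qf in HV.
        pose proof (qf_lower I J adj mu HI HJ Htree mm Hmm x) as Hql. fold c0v in Hql.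
        pose proof (lower_pow (qf I J adj mu mm x) (N2 I x) (norm I x) c0v (pp m) c0v_pos (pp_pos m Hm)
            (qf_nonneg I J adj mu mm Hmm x) Hql (eq_sym (norm_sq I x)) (norm_nonneg I x)) as Hlp.
        rewrite pp_eq in Hlp. pose proof (Rpower_pos c0v (pp m)).
        apply (bounded_by_rpow m); auto. apply norm_nonneg.
        assert (0 < kap * Rpower c0v (pp m)) by (apply Rmult_lt_0_compat; auto).
        apply Rmult_le_reg_l with (kap * Rpower c0v (pp m)); auto.
        replace (kap * Rpower c0v (pp m) * (lvl / (kap * Rpower c0v (pp m)))) with lvl by (field; lra).
        assert (kap * (Rpower c0v (pp m) * rpow (norm I x) m) <= kap * Rpower (1 + qf I J adj mu mm x) (pp m)) by (apply Rmult_le_compat_l; lra).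
        nra.
      * intros xs y Hxs Hy Hc. split; auto. apply (closed_le I (Vfin I J adj mu m mm kap) lvl xs y Vcont); auto.
        intros n; destruct (Hxs n) as [A [_ B]]; auto.
    + intros x uc us Hx HU HK. apply out_bound; auto.
    + intros x uc us Hx HU HK. apply in_bound; auto.
Qed.

End WithMin.
Lemma final_mm : exists delta Ct0, delta > 0 /\ Ct0 > 0 /\
    HypothesisA I J adj lm gam ell mu (rcost I J m xi zeta) (Kdelta I delta) (fun x _ _ => Ct0 * rpow (norm I x) m).
Proof. destruct min_ex as [ucs [uss [Hus Hmin]]].
  exists del, (Ct ucs uss). split; [apply del_pos|]. split; [apply (Ct_pos ucs uss Hus)|].
  apply (hypA ucs uss Hus Hmin). Qed.
End Final.

End Main2.
Import Main2.

Open Scope R_scope.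

Lemma mpar_pos I J adj mu : (1 <= J)%nat -> is_tree I J adj ->
  (forall i j, (i < I)%nat -> (j < J)%nat -> adj i j = true -> mu i j > 0) ->
  forall k, (k < I)%nat -> 0 < mpar I J adj mu k.
Proof. intros HJ Ht Hmu k Hk. destruct (par_inl I J adj HJ Ht k Hk) as [j0 [Hp [Hj0 Ha]]].
  unfold mpar. rewrite (rsum_single J _ j0 Hj0). rewrite chi_T by auto. specialize (Hmu k j0 Hk Hj0 Ha). lra.
  intros j Hj Hne. rewrite chi_F. ring. congruence. Qed.

Theorem mainTheorem6 (I J : nat) (adj : nat -> nat -> bool)
    (lam gam ell : nat -> R) (mu : nat -> nat -> R) (m : R) (xi zeta : nat -> R) :
  (1 <= I)%nat -> (1 <= J)%nat ->
  is_tree I J adj ->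
  (forall i, (i < I)%nat -> lam i > 0) ->
  (forall i, (i < I)%nat -> gam i >= 0) ->
  (forall i j, (i < I)%nat -> (j < J)%nat -> adj i j = true -> mu i j > 0) ->
  (forall i j, (i < I)%nat -> (j < J)%nat -> adj i j = false -> mu i j = 0) ->
  m >= 1 ->
  (forall i, (i < I)%nat -> xi i > 0) ->
  (forall j, (j < J)%nat -> zeta j > 0) ->
  exists delta Ct, delta > 0 /\ Ct > 0 /\
    HypothesisA I J adj lam gam ell mu (rcost I J m xi zeta) (Kdelta I delta)
      (fun x _ _ => Ct * rpow (norm I x) m).
Proof. intros HI HJ Htree Hlam Hgam Hmu Hmu0 Hm Hxi Hzeta.
  destruct (argmin_ex I (mpar I J adj mu) HI) as [i0 [Hi0 Hmin]].
  apply (final_mm I J adj lam gam ell mu m xi zeta HI HJ Htree Hlam Hmu0 Hm Hxi Hzeta (mpar I J adj mu i0)).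
  apply (mpar_pos I J adj mu HJ Htree Hmu i0 Hi0). auto. Qed.
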